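(* Let $Q_\infty=(q_0,q_1,q_2,\dots)$ be an infinite stochastic vector with positive coordinates, fix a GLS-expansion with cylinder lengths given by $Q_\infty$, and let $V=\{i_1,i_2,\dots,i_k,i_{k+1},\dots\}\subset\mathbb{N}_0$ be an infinite set. If the equation $\sum_{i\in V} q_i^x=1$ has no roots on $[0,1]$, then \[\dim_H\bigl(C[\mathit{GLS},V]\bigr)=\lim_{k\to\infty}\dim_H\bigl(C[\mathit{GLS},V_k]\bigr),\] where $V_k=\{i_1,i_2,\dots,i_k\}$, $k\in\mathbb{N}$, $k\ge 2$.
   Context: GLS-expansion: Let $Q_\infty=(q_0,q_1,\dots)$ be a stochastic vector with positive coordinates ($q_i>0$, $\sum_{i\ge 0} q_i=1$). Choose closed intervals $\Delta_i=[a_i,b_i]\subset[0,1]$, $i\in\mathbb{N}_0$, with pairwise disjoint interiors and $|\Delta_i|=q_i$ (cylinders of rank 1). Let $f_i:[0,1]\to\Delta_i$ be the increasing affine bijection. The cylinders of rank $n$ are $\Delta_{i_1i_2\dots i_n}=f_{i_1}\circ\dots\circ f_{i_n}([0,1])$, so the placement of $\Delta_{i_1\dots i_n}$ inside $\Delta_{i_1\dots i_{n-1}}$ is the same as that of $\Delta_{i_n}$ inside $[0,1]$ and $|\Delta_{i_1\dots i_n}|=q_{i_1}\cdots q_{i_n}$. For any sequence $(i_k)$ in $\mathbb{N}_0$, $\bigcap_k \Delta_{i_1\dots i_k}$ is a single point, denoted $\Delta^{\mathit{GLS}}_{i_1i_2\dots}$. For $W\subset\mathbb{N}_0$, $C[\mathit{GLS},W]=\{\Delta^{\mathit{GLS}}_{\alpha_1\alpha_2\dots}:\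 \alpha_k\in W \text{ for all } k\}$. *)

(* Defs.v *)
From Stdlib Require Import Reals.
From Coquelicot Require Import Coquelicot.
Open Scope R_scope.

(* diameter of a set (m_infty for the empty set, p_infty if unbounded) *)
Definition diam (U : R -> Prop) : Rbar :=
  Lub_Rbar (fun d => exists x y, U x /\ U y /\ d = Rabs (x - y)).

(* d^s for d >= 0 and s > 0 (convention 0^s = 0; only used with s > 0) *)
Definition powp (d s : R) : R := if Rle_dec d 0 then 0 else Rpower d s.

(* contribution |U|^s of a covering set; the empty set contributes 0 *)
Definition dterm (s : R) (U : R -> Prop) : R := powp (Rmax 0 (real (diam U))) s.

Definition hausdorff_delta (s delta : R) (E : R -> Prop) : Rbar :=
  Glb_Rbar (fun v => exists U : nat -> R -> Prop,
     (forall n, Rbar_le (diam (U n)) (Finite delta)) /\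
     (forall x, E x -> exists n, U n x) /\
     ex_series (fun n => dterm s (U n)) /\
     v = Series (fun n => dterm s (U n))).

Definition hausdorff_measure (s : R) (E : R -> Prop) : Rbar :=
  Lub_Rbar (fun v => exists delta, 0 < delta /\
                       Rbar_le (Finite v) (hausdorff_delta s delta E)).

(* dim_H E = inf { s > 0 : H^s(E) = 0 } (finite, in [0,1], for E ⊆ [0,1]) *)
Definition dimH (E : R -> Prop) : R :=
  real (Glb_Rbar (fun s => 0 < s /\ hausdorff_measure s E = Finite 0)).

(* Rank-1 cylinders Delta_i = [a i, a i + q i]; f_i x = a i + q i * x. *)
Definition gls_f (q a : nat -> R) (i : nat) (x : R) : R := a i + q i * x.

Fixpoint gls_comp (q a : nat -> R) (alpha : nat -> nat) (n : nat) (x : R) : R :=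
  match n with
  | O => x
  | S m => gls_comp q a alpha m (gls_f q a (alpha m) x)
  end.

Definition gls_cyl (q a : nat -> R) (alpha : nat -> nat) (n : nat) (y : R) : Prop :=
  exists t, 0 <= t <= 1 /\ y = gls_comp q a alpha n t.

Definition GLS_set (q a : nat -> R) (W : nat -> Prop) (x : R) : Prop :=
  exists alpha : nat -> nat, (forall k, W (alpha k)) /\
                             (forall n, gls_cyl q a alpha n x).

(* Main.v *)
Require Import Defs.
From Stdlib Require Import Reals.
From Coquelicot Require Import Coquelicot.
Open Scope R_scope.
From Stdlib Require Import Lra Lia List Classical IndefiniteDescription ClassicalDescription.
From Stdlib Require FinFun.
From Coquelicot Require Import Coquelicot.
Import ListNotations.
Open Scope R_scope.

Fixpoint fs (a : nat -> R) (M : nat) : R :=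
  match M with O => 0 | S m => fs a m + a m end.

Lemma sum_n_fs a N : sum_n a N = fs a (S N).
Proof.
  induction N as [|N IH]; simpl.
  - rewrite sum_O. lra.
  - rewrite sum_Sn, IH. simpl. reflexivity.
Qed.

Lemma fs_nonneg a M : (forall n, 0 <= a n) -> 0 <= fs a M.
Proof. intros H; induction M; simpl; [lra|]. specialize (H M); lra. Qed.

Lemma fs_mono a M1 M2 : (forall n, 0 <= a n) -> (M1 <= M2)%nat -> fs a M1 <= fs a M2.
Proof.
  intros H Hle; induction Hle; [lra|]. simpl. specialize (H m); lra.
Qed.

Lemma fs_le a b M : (forall n, a n <= b n) -> fs a M <= fs b M.
Proof. intros H; induction M; simpl; [lra|]. specialize (H M); lra. Qed.

Lemma fs_ext a b M : (forall n, (n < M)%nat -> a n = b n) -> fs a M = fs b M.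
Proof. intros H; induction M; simpl; [lra|]. rewrite IHM by (intros; apply H; lia).
  rewrite H by lia. lra. Qed.

Lemma fs_plus a b M : fs (fun n => a n + b n) M = fs a M + fs b M.
Proof. induction M; simpl; lra. Qed.

Lemma fs_scal c a M : fs (fun n => c * a n) M = c * fs a M.
Proof. induction M; simpl; [lra|]. rewrite IHM; lra. Qed.

Lemma nn_series_bounded (a : nat -> R) (B : R) :
  (forall n, 0 <= a n) -> (forall M, fs a M <= B) -> ex_series a /\ Series a <= B.
Proof.
  intros Hpos HB.
  assert (Hinc : forall n, sum_n a n <= sum_n a (S n)).
  { intros n. rewrite !sum_n_fs. apply fs_mono; auto. }
  destruct (ex_lim_seq_incr _ Hinc) as [l Hl].
  assert (H1 : Rbar_le l B).
  { refine (is_lim_seq_le _ _ l B _ Hl (is_lim_seq_const B)).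
    intros n. rewrite sum_n_fs. apply HB. }
  assert (H2 : Rbar_le (sum_n a 0) l).
  { refine (is_lim_seq_le _ _ _ l _ (is_lim_seq_const (sum_n a 0)) Hl).
    intros n. rewrite !sum_n_fs. apply fs_mono; auto; lia. }
  destruct l as [l| |]; simpl in H1, H2; try contradiction.
  assert (Hs : is_series a l) by exact Hl.
  split. exists l; exact Hs.
  rewrite (is_series_unique _ _ Hs). exact H1.
Qed.

Lemma nn_series_ge_partial (a : nat -> R) M :
  (forall n, 0 <= a n) -> ex_series a -> fs a M <= Series a.
Proof.
  intros Hpos [l Hl]. rewrite (is_series_unique _ _ Hl).
  assert (Hl' : is_lim_seq (sum_n a) l) by exact Hl.
  assert (H : Rbar_le (sum_n a M) l).
  { apply is_lim_seq_incr_n with (N := M) in Hl'.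
    refine (is_lim_seq_le _ _ _ l _ (is_lim_seq_const (sum_n a M)) Hl').
    intros n. rewrite !sum_n_fs. apply fs_mono; auto; lia. }
  simpl in H. rewrite sum_n_fs in H. apply Rle_trans with (fs a (S M)); auto.
  apply fs_mono; auto.
Qed.

Lemma Series_nonneg (a : nat -> R) : (forall n, 0 <= a n) -> ex_series a -> 0 <= Series a.
Proof. intros H1 H2. apply Rle_trans with (fs a 0). simpl; lra. apply nn_series_ge_partial; auto. Qed.

Lemma nn_series_le_of_partial (a : nat -> R) (B : R) :
  (forall n, 0 <= a n) -> ex_series a -> Series a <= B -> forall M, fs a M <= B.
Proof. intros. eapply Rle_trans. apply nn_series_ge_partial; auto. auto. Qed.

Lemma diam_ge (U : R -> Prop) x y : U x -> U y -> Rbar_le (Rabs (x - y)) (diam U).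
Proof.
  intros Hx Hy. destruct (Lub_Rbar_correct (fun d => exists x y, U x /\ U y /\ d = Rabs (x - y))) as [H1 _].
  apply H1. exists x, y. auto.
Qed.

Lemma diam_le (U : R -> Prop) (t : R) :
  (forall x y, U x -> U y -> Rabs (x - y) <= t) -> Rbar_le (diam U) t.
Proof.
  intros H. destruct (Lub_Rbar_correct (fun d => exists x y, U x /\ U y /\ d = Rabs (x - y))) as [_ H2].
  apply H2. intros d (x & y & Hx & Hy & ->). simpl. auto.
Qed.

Lemma diam_empty (U : R -> Prop) : (forall x, ~ U x) -> diam U = m_infty.
Proof.
  intros H. apply is_lub_Rbar_unique. split.
  - intros d (x & y & Hx & _). exfalso; eapply H; eauto.
  - intros b _. destruct b; simpl; auto.
Qed.

Lemma powp_nonneg d s : 0 <= powp d s.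
Proof. unfold powp. destruct (Rle_dec d 0). lra. unfold Rpower. left; apply exp_pos. Qed.

Lemma powp_pos d s : 0 < d -> powp d s = Rpower d s.
Proof. intros H. unfold powp. destruct (Rle_dec d 0); [lra|auto]. Qed.

Lemma powp_mono d1 d2 s : 0 <= s -> d1 <= d2 -> powp d1 s <= powp d2 s.
Proof.
  intros Hs H. unfold powp. destruct (Rle_dec d1 0), (Rle_dec d2 0).
  - lra.
  - unfold Rpower; left; apply exp_pos.
  - lra.
  - apply Rle_Rpower_l; lra.
Qed.

Lemma dterm_nonneg s U : 0 <= dterm s U.
Proof. apply powp_nonneg. Qed.

Lemma dterm_empty s U : (forall x, ~ U x) -> dterm s U = 0.
Proof.
  intros H. unfold dterm. rewrite (diam_empty U H). simpl.
  rewrite Rmax_left by lra. unfold powp. destruct (Rle_dec 0 0); lra.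
Qed.

Lemma diam_fin (U : R -> Prop) x0 (d : R) :
  U x0 -> Rbar_le (diam U) d -> exists t, diam U = Finite t /\ 0 <= t <= d.
Proof.
  intros Hx Hd. pose proof (diam_ge U x0 x0 Hx Hx) as Hg.
  destruct (diam U) as [t| |] eqn:E; simpl in *; try contradiction.
  exists t. split; auto. rewrite Rminus_diag, Rabs_R0 in Hg. lra.
Qed.

Lemma dterm_fin s U t : diam U = Finite t -> 0 <= t -> dterm s U = powp t s.
Proof. intros E Ht. unfold dterm. rewrite E. simpl. rewrite Rmax_right; auto. Qed.

Lemma dterm_le s U t : 0 <= s -> 0 <= t ->
  (forall x y, U x -> U y -> Rabs (x - y) <= t) -> dterm s U <= powp t s.
Proof.
  intros Hs Ht H.
  destruct (Classical_Prop.classic (exists x, U x)) as [[x0 Hx]|Hn].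
  - destruct (diam_fin U x0 t Hx (diam_le U t H)) as (t' & E & Ht').
    rewrite (dterm_fin s U t' E) by lra. apply powp_mono; lra.
  - rewrite dterm_empty. apply powp_nonneg. intros x Hx; apply Hn; eauto.
Qed.

Definition valid_cover (s delta : R) (E : R -> Prop) (U : nat -> R -> Prop) : Prop :=
  (forall n, Rbar_le (diam (U n)) (Finite delta)) /\
  (forall x, E x -> exists n, U n x) /\
  ex_series (fun n => dterm s (U n)).

Definition null (s : R) (E : R -> Prop) : Prop :=
  forall delta, 0 < delta -> forall eps, 0 < eps ->
    exists U, valid_cover s delta E U /\ Series (fun n => dterm s (U n)) <= eps.

Lemma hd_ge0 s delta E : Rbar_le 0 (hausdorff_delta s delta E).
Proof.
  unfold hausdorff_delta.
  destruct (Glb_Rbar_correct (fun v => exists U : nat -> R -> Prop,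
     (forall n, Rbar_le (diam (U n)) (Finite delta)) /\
     (forall x, E x -> exists n, U n x) /\
     ex_series (fun n => dterm s (U n)) /\
     v = Series (fun n => dterm s (U n)))) as [_ H2].
  apply H2. intros v (U & _ & _ & Hex & ->). simpl.
  apply Series_nonneg; auto. intros; apply dterm_nonneg.
Qed.

Lemma null_iff s E : hausdorff_measure s E = Finite 0 <-> null s E.
Proof.
  split.
  - intros H delta Hd eps He.
    set (P := fun v => exists U : nat -> R -> Prop,
     (forall n, Rbar_le (diam (U n)) (Finite delta)) /\
     (forall x, E x -> exists n, U n x) /\
     ex_series (fun n => dterm s (U n)) /\
     v = Series (fun n => dterm s (U n))).
    assert (Hlt : ~ Rbar_le eps (hausdorff_delta s delta E)).
    { intros Hle. unfold hausdorff_measure in H.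
      destruct (Lub_Rbar_correct (fun v => exists delta, 0 < delta /\
                       Rbar_le (Finite v) (hausdorff_delta s delta E))) as [H1 _].
      rewrite H in H1. assert (Hx := H1 eps (ex_intro _ delta (conj Hd Hle))). simpl in Hx. lra. }
    destruct (Classical_Prop.classic (exists v, P v /\ v <= eps)) as [(v & (U & H1 & H2 & H3 & ->) & Hv)|Hn].
    + exists U. split; [split; auto|auto].
    + exfalso. apply Hlt. unfold hausdorff_delta. fold P.
      destruct (Glb_Rbar_correct P) as [_ H2]. apply H2.
      intros v Hv. simpl. destruct (Rle_dec v eps); [|lra]. exfalso; apply Hn; eauto.
  - intros H. unfold hausdorff_measure. apply is_lub_Rbar_unique. split.
    + intros v (delta & Hd & Hv).
      assert (Hz : Rbar_le (hausdorff_delta s delta E) 0).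
      { destruct (hausdorff_delta s delta E) as [h| |] eqn:Eh; simpl; auto.
        - apply Rnot_lt_le. intros Hh.
          destruct (H delta Hd (h/2) ltac:(lra)) as (U & (H1 & H2 & H3) & H4).
          unfold hausdorff_delta in Eh.
          destruct (Glb_Rbar_correct (fun v => exists U : nat -> R -> Prop,
             (forall n, Rbar_le (diam (U n)) (Finite delta)) /\
             (forall x, E x -> exists n, U n x) /\
             ex_series (fun n => dterm s (U n)) /\
             v = Series (fun n => dterm s (U n)))) as [Hlb _].
          rewrite Eh in Hlb. assert (X := Hlb _ (ex_intro _ U (conj H1 (conj H2 (conj H3 eq_refl))))).
          simpl in X. lra.
        - destruct (H delta Hd 1 ltac:(lra)) as (U & (H1 & H2 & H3) & H4).
          unfold hausdorff_delta in Eh.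
          destruct (Glb_Rbar_correct (fun v => exists U : nat -> R -> Prop,
             (forall n, Rbar_le (diam (U n)) (Finite delta)) /\
             (forall x, E x -> exists n, U n x) /\
             ex_series (fun n => dterm s (U n)) /\
             v = Series (fun n => dterm s (U n)))) as [Hlb _].
          rewrite Eh in Hlb. apply (Hlb _ (ex_intro _ U (conj H1 (conj H2 (conj H3 eq_refl))))). }
      eapply Rbar_le_trans; eauto.
    + intros b Hb. apply (Hb 0). exists 1. split; [lra|]. apply hd_ge0.
Qed.

Definition Gset (E : R -> Prop) := fun s => 0 < s /\ null s E.

Lemma dimH_eq E : dimH E = real (Glb_Rbar (Gset E)).
Proof.
  unfold dimH. f_equal. apply Glb_Rbar_eqset. intros x. unfold Gset.
  rewrite null_iff. tauto.
Qed.

Lemma dimH_fin E s0 : Gset E s0 ->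
  exists g, Glb_Rbar (Gset E) = Finite g /\ 0 <= g /\ forall s, Gset E s -> g <= s.
Proof.
  intros Hs0. destruct (Glb_Rbar_correct (Gset E)) as [H1 H2].
  assert (A : Rbar_le 0 (Glb_Rbar (Gset E))).
  { apply H2. intros x [Hx _]. simpl; lra. }
  pose proof (H1 s0 Hs0) as B.
  destruct (Glb_Rbar (Gset E)) as [g| |]; simpl in A, B; try contradiction.
  exists g. refine (conj eq_refl (conj A _)). intros s Hs. apply (H1 s Hs).
Qed.

Lemma dimH_le E s : 0 < s -> null s E -> dimH E <= s.
Proof.
  intros Hs Hn. rewrite dimH_eq. destruct (dimH_fin E s (conj Hs Hn)) as (g & -> & _ & H).
  simpl. apply H. split; auto.
Qed.

Lemma dimH_ge0 E s0 : 0 < s0 -> null s0 E -> 0 <= dimH E.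
Proof.
  intros Hs Hn. rewrite dimH_eq. destruct (dimH_fin E s0 (conj Hs Hn)) as (g & -> & H & _). simpl; auto.
Qed.

Lemma dimH_ge E s0 t : 0 < s0 -> null s0 E ->
  (forall s, 0 < s -> null s E -> t <= s) -> t <= dimH E.
Proof.
  intros Hs Hn H. rewrite dimH_eq.
  destruct (Glb_Rbar_correct (Gset E)) as [H1 H2].
  destruct (dimH_fin E s0 (conj Hs Hn)) as (g & Eg & _ & _).
  assert (X : Rbar_le t (Glb_Rbar (Gset E))).
  { apply H2. intros x [Hx1 Hx2]. simpl. auto. }
  rewrite Eg in X. simpl in X. rewrite Eg. simpl. exact X.
Qed.

Lemma null_mono s (E E' : R -> Prop) : (forall x, E x -> E' x) -> null s E' -> null s E.
Proof.
  intros Hsub H delta Hd eps He. destruct (H delta Hd eps He) as (U & (H1 & H2 & H3) & H4).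
  exists U. split; [split; [|split]|]; auto.
Qed.

Lemma dimH_mono (E E' : R -> Prop) s0 : (forall x, E x -> E' x) -> 0 < s0 -> null s0 E' ->
  dimH E <= dimH E'.
Proof.
  intros Hsub Hs Hn. apply (dimH_ge E' s0); auto.
  intros s Hs' Hn'. apply dimH_le; auto. eapply null_mono; eauto.
Qed.

Fixpoint wcomp (q a : nat -> R) (w : list nat) (x : R) : R :=
  match w with [] => x | i :: w' => gls_f q a i (wcomp q a w' x) end.

Fixpoint qw (q : nat -> R) (w : list nat) : R :=
  match w with [] => 1 | i :: w' => q i * qw q w' end.

Fixpoint pref (al : nat -> nat) (m : nat) : list nat :=
  match m with O => [] | S m' => pref al m' ++ [al m'] end.

Lemma comp_affine q a w x : wcomp q a w x = wcomp q a w 0 + qw q w * x.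
Proof. induction w as [|i w IH]; simpl; [lra|]. unfold gls_f. rewrite IH. ring. Qed.

Lemma comp_app q a w1 w2 x : wcomp q a (w1 ++ w2) x = wcomp q a w1 (wcomp q a w2 x).
Proof. induction w1 as [|i w IH]; simpl; auto. rewrite IH; auto. Qed.

Lemma qw_app q w1 w2 : qw q (w1 ++ w2) = qw q w1 * qw q w2.
Proof. induction w1 as [|i w IH]; simpl; [lra|]. rewrite IH; ring. Qed.

Lemma qw_pos q w : (forall i, 0 < q i) -> 0 < qw q w.
Proof. intros H; induction w; simpl; [lra|]. apply Rmult_lt_0_compat; auto. Qed.

Lemma gls_comp_pref q a al m x : gls_comp q a al m x = wcomp q a (pref al m) x.
Proof.
  revert x; induction m as [|m IH]; intros x; simpl; auto.
  rewrite IH, comp_app. simpl. reflexivity.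
Qed.

Lemma pref_length al m : length (pref al m) = m.
Proof. induction m; simpl; auto. rewrite length_app, IHm; simpl; lia. Qed.

Lemma pref_firstn al m j : (j <= m)%nat -> firstn j (pref al m) = pref al j.
Proof.
  induction m as [|m IH]; intros Hj.
  - assert (j = 0%nat) by lia; subst; reflexivity.
  - destruct (Nat.eq_dec j (S m)) as [->|Hne].
    + rewrite firstn_all2; auto. rewrite pref_length; lia.
    + simpl. rewrite firstn_app. rewrite pref_length.
      replace (j - m)%nat with 0%nat by lia. simpl. rewrite app_nil_r. apply IH; lia.
Qed.

Lemma pref_S al m : pref al (S m) = al 0%nat :: pref (fun k => al (S k)) m.
Proof.
  induction m as [|m IH]; simpl; auto.
  simpl in IH. rewrite IH. reflexivity.
Qed.

Lemma pref_in al m i : In i (pref al m) -> exists k, (k < m)%nat /\ i = al k.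
Proof.
  induction m as [|m IH]; simpl; [tauto|]. intros H. apply in_app_or in H as [H|[H|[]]].
  - destruct (IH H) as (k & Hk & ->). exists k; split; auto; lia.
  - exists m; split; auto.
Qed.

Definition incyl q a w x := wcomp q a w 0 <= x <= wcomp q a w 0 + qw q w.

Lemma gls_cyl_iff q a al n x : (forall i, 0 < q i) ->
  (gls_cyl q a al n x <-> incyl q a (pref al n) x).
Proof.
  intros Hq. unfold gls_cyl, incyl. pose proof (qw_pos q (pref al n) Hq) as Hp.
  split.
  - intros (t & [T1 T2] & ->). rewrite gls_comp_pref, (comp_affine q a (pref al n) t).
    split; [pose proof (Rmult_le_pos _ _ (Rlt_le _ _ Hp) T1) | pose proof (Rmult_le_compat_l _ _ _ (Rlt_le _ _ Hp) T2)]; lra.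
  - intros Hx. exists ((x - wcomp q a (pref al n) 0) / qw q (pref al n)).
    split.
    + split. apply Rdiv_le_0_compat; lra.
      apply Rmult_le_reg_r with (qw q (pref al n)); auto.
      unfold Rdiv. rewrite Rmult_assoc, Rinv_l by lra. lra.
    + rewrite gls_comp_pref, comp_affine. field. lra.
Qed.

Lemma cyl_in01 q a w : (forall i, 0 < q i) -> (forall i, 0 <= a i /\ a i + q i <= 1) ->
  0 <= wcomp q a w 0 /\ wcomp q a w 0 + qw q w <= 1.
Proof.
  intros Hq Ha. induction w as [|i w IH]; simpl; [lra|]. unfold gls_f.
  destruct (Ha i). specialize (Hq i). split; nra.
Qed.

Lemma incyl_snoc q a w i x : (forall i, 0 < q i) -> (forall i, 0 <= a i /\ a i + q i <= 1) ->
  incyl q a (w ++ [i]) x -> incyl q a w x.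
Proof.
  intros Hq Ha. unfold incyl. rewrite comp_app, qw_app. simpl.
  rewrite (comp_affine q a w (gls_f q a i 0)). unfold gls_f.
  pose proof (qw_pos q w Hq). destruct (Ha i). specialize (Hq i). intros [X1 X2].
  split; nra.
Qed.

Lemma incyl_pref_mono q a al m m' x : (forall i, 0 < q i) -> (forall i, 0 <= a i /\ a i + q i <= 1) ->
  (m <= m')%nat -> incyl q a (pref al m') x -> incyl q a (pref al m) x.
Proof.
  intros Hq Ha Hle. induction Hle; auto. intros H. apply IHHle.
  simpl in H. eapply incyl_snoc; eauto.
Qed.

Definition is_prefix (p v : list nat) := exists r, v = p ++ r.

Lemma split_words (u w : list nat) : ~ is_prefix u w -> ~ is_prefix w u ->
  exists c i j u' w', i <> j /\ u = c ++ i :: u' /\ w = c ++ j :: w'.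
Proof.
  revert w; induction u as [|i u IH]; intros w H1 H2.
  - exfalso; apply H1. exists w; reflexivity.
  - destruct w as [|j w].
    + exfalso; apply H2. exists (i :: u); reflexivity.
    + destruct (Nat.eq_dec i j) as [<-|Hne].
      * destruct (IH w) as (c & i' & j' & u' & w' & Hn & -> & ->).
        { intros (r & Hr). apply H1. exists r. simpl; rewrite Hr; reflexivity. }
        { intros (r & Hr). apply H2. exists r. simpl; rewrite Hr; reflexivity. }
        exists (i :: c), i', j', u', w'. simpl. auto.
      * exists [], i, j, u, w. simpl. auto.
Qed.

Lemma interior_sub q a c i u y : (forall i, 0 < q i) -> (forall i, 0 <= a i /\ a i + q i <= 1) ->
  wcomp q a (c ++ i :: u) 0 < y < wcomp q a (c ++ i :: u) 0 + qw q (c ++ i :: u) ->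
  exists z, a i < z < a i + q i /\ y = wcomp q a c z.
Proof.
  intros Hq Ha. rewrite comp_app, qw_app. simpl. unfold gls_f.
  rewrite (comp_affine q a c). pose proof (qw_pos q c Hq) as Hc.
  destruct (cyl_in01 q a u Hq Ha) as [L1 L2]. pose proof (qw_pos q u Hq).
  set (L := wcomp q a u 0) in *. set (C0 := wcomp q a c 0). set (Q := qw q c) in *.
  intros [Y1 Y2]. exists ((y - C0) / Q).
  assert (E : y = C0 + Q * ((y - C0) / Q)) by (field; lra).
  split.
  - set (z := (y - C0) / Q) in *. specialize (Hq i).
    assert (Z1 : Q * (a i + q i * L) < Q * z) by lra.
    assert (Z2 : Q * z < Q * (a i + q i * L + q i * (q i * 0 + qw q u))) by nra.
    apply Rmult_lt_reg_l in Z1; auto. apply Rmult_lt_reg_l in Z2; auto.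
    split; nra.
  - rewrite (comp_affine q a c). exact E.
Qed.

Lemma disj_cyl q a u w y : (forall i, 0 < q i) -> (forall i, 0 <= a i /\ a i + q i <= 1) ->
  (forall i j, i <> j -> forall x, ~ ((a i < x < a i + q i) /\ (a j < x < a j + q j))) ->
  ~ is_prefix u w -> ~ is_prefix w u ->
  ~ ((wcomp q a u 0 < y < wcomp q a u 0 + qw q u) /\ (wcomp q a w 0 < y < wcomp q a w 0 + qw q w)).
Proof.
  intros Hq Ha Hd H1 H2 [Y1 Y2].
  destruct (split_words u w H1 H2) as (c & i & j & u' & w' & Hn & -> & ->).
  destruct (interior_sub q a c i u' y Hq Ha Y1) as (z1 & Z1 & E1).
  destruct (interior_sub q a c j w' y Hq Ha Y2) as (z2 & Z2 & E2).
  rewrite (comp_affine q a c) in E1, E2. pose proof (qw_pos q c Hq).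
  assert (z1 = z2).
  { apply Rmult_eq_reg_l with (qw q c); lra. }
  subst. apply (Hd i j Hn z2). auto.
Qed.

Definition stopw (q : nat -> R) (d : R) (u : list nat) : Prop :=
  qw q u <= d /\ forall j, (j < length u)%nat -> d < qw q (firstn j u).

Lemma stopw_incomp q d u w : stopw q d u -> stopw q d w -> u <> w -> ~ is_prefix u w.
Proof.
  intros [H1 H2] [H3 H4] Hne [r ->]. destruct r as [|x r].
  - apply Hne. rewrite app_nil_r; reflexivity.
  - specialize (H4 (length u)). rewrite firstn_app, firstn_all, Nat.sub_diag in H4.
    simpl in H4. rewrite app_nil_r in H4. rewrite length_app in H4. simpl in H4.
    specialize (H4 ltac:(lia)). lra.
Qed.

Definition lsum {T} (f : T -> R) (l : list T) : R := fold_right (fun t acc => f t + acc) 0 l.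

Lemma lsum_app {T} (f : T -> R) l1 l2 : lsum f (l1 ++ l2) = lsum f l1 + lsum f l2.
Proof. induction l1; simpl; [lra|]. unfold lsum in *; simpl. rewrite IHl1. lra. Qed.

Lemma lsum_filter {T} (f : T -> R) (p : T -> bool) l :
  lsum f l = lsum f (filter p l) + lsum f (filter (fun t => negb (p t)) l).
Proof.
  induction l as [|t l IH]; simpl; [unfold lsum; simpl; lra|].
  destruct (p t); simpl; unfold lsum in *; simpl; rewrite IH; lra.
Qed.

Lemma lsum_le {T} (f g : T -> R) l : (forall t, In t l -> f t <= g t) -> lsum f l <= lsum g l.
Proof.
  induction l as [|t l IH]; intros H; unfold lsum; simpl; [lra|].
  fold (lsum f l) (lsum g l). assert (H1 := H t (or_introl eq_refl)).
  assert (lsum f l <= lsum g l) by (apply IH; intros; apply H; simpl; auto). lra.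
Qed.

Lemma lsum_nonneg {T} (f : T -> R) l : (forall t, In t l -> 0 <= f t) -> 0 <= lsum f l.
Proof.
  intros H. apply Rle_trans with (lsum (fun _ => 0) l).
  - induction l; unfold lsum; simpl; [lra|]. fold (lsum (fun _ : T => 0) l). 
    assert (0 <= lsum (fun _ => 0) l) by (apply IHl; intros; apply H; simpl; auto). lra.
  - apply lsum_le; auto.
Qed.

Lemma lsum_scal {T} (c : R) (f : T -> R) l : lsum (fun t => c * f t) l = c * lsum f l.
Proof. induction l; unfold lsum in *; simpl; [lra|]. rewrite IHl; lra. Qed.

Lemma lsum_plus {T} (f g : T -> R) l : lsum (fun t => f t + g t) l = lsum f l + lsum g l.
Proof. induction l; unfold lsum in *; simpl; [lra|]. rewrite IHl; lra. Qed.

Lemma two_intervals (x1 l1 x2 l2 : R) : 0 < l1 -> 0 < l2 ->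
  (forall y, ~ (x1 < y < x1 + l1 /\ x2 < y < x2 + l2)) ->
  x2 + l2 <= x1 \/ x1 + l1 <= x2.
Proof.
  intros H1 H2 H. destruct (Rle_dec (x2 + l2) x1); [left; auto|].
  destruct (Rle_dec (x1 + l1) x2); [right; auto|]. exfalso.
  destruct (Rle_dec x1 x2), (Rle_dec (x1 + l1) (x2 + l2)).
  - apply (H ((x2 + x1 + l1) / 2)). lra.
  - apply (H ((x2 + x2 + l2) / 2)). lra.
  - apply (H ((x1 + x1 + l1) / 2)). lra.
  - apply (H ((x1 + x2 + l2) / 2)). lra.
Qed.

Lemma packing {T} (x len : T -> R) : forall (n : nat) (l : list T) (A B : R),
  (length l <= n)%nat -> A <= B -> NoDup l ->
  (forall t, In t l -> 0 < len t /\ A <= x t /\ x t + len t <= B) ->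
  (forall t t', In t l -> In t' l -> t <> t' -> forall y,
      ~ (x t < y < x t + len t /\ x t' < y < x t' + len t')) ->
  lsum len l <= B - A.
Proof.
  induction n as [|n IH]; intros l A B Hl HAB Hnd Hin Hdisj.
  - destruct l; simpl in Hl; [unfold lsum; simpl; lra | lia].
  - destruct l as [|t l']; [unfold lsum; simpl; lra|].
    simpl in Hl. inversion Hnd as [|? ? Hnot Hnd']; subst.
    destruct (Hin t (or_introl eq_refl)) as (Ht1 & Ht2 & Ht3).
    set (p := fun t' => if Rle_dec (x t' + len t') (x t) then true else false).
    unfold lsum; simpl; fold (lsum len l').
    rewrite (lsum_filter len p l').
    assert (L1 : lsum len (filter p l') <= x t - A).
    { apply IH; auto.
      - pose proof (filter_length_le p l'). lia.
      - apply NoDup_filter; auto.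
      - intros t' Ht'. apply filter_In in Ht' as [Ht' Hp]. unfold p in Hp.
        destruct (Rle_dec (x t' + len t') (x t)); [|discriminate].
        destruct (Hin t' (or_intror Ht')) as (? & ? & ?). lra.
      - intros t1 t2 H1 H2. apply filter_In in H1, H2. apply Hdisj; simpl; tauto. }
    assert (L2 : lsum len (filter (fun t' => negb (p t')) l') <= B - (x t + len t)).
    { apply IH; auto.
      - pose proof (filter_length_le (fun t' => negb (p t')) l'). lia.
      - apply NoDup_filter; auto.
      - intros t' Ht'. apply filter_In in Ht' as [Ht' Hp]. unfold p in Hp.
        destruct (Rle_dec (x t' + len t') (x t)); [discriminate|].
        destruct (Hin t' (or_intror Ht')) as (Q0 & Q1 & Q2).
        assert (Hne : t' <> t) by (intros ->; contradiction).
        destruct (two_intervals (x t) (len t) (x t') (len t') Ht1 Q0) as [Hc|Hc].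
        { intros y; apply Hdisj; simpl; auto. }
        { contradiction. }
        { split; [lra|]. split; [lra|]. lra. }
      - intros t1 t2 H1 H2. apply filter_In in H1, H2. apply Hdisj; simpl; tauto. }
    lra.
Qed.

Fixpoint words (F : list nat) (M : nat) : list (list nat) :=
  match M with
  | O => [[]]
  | S M' => flat_map (fun i => map (cons i) (words F M')) F
  end.

Lemma in_words F M v : In v (words F M) <-> length v = M /\ forall i, In i v -> In i F.
Proof.
  revert v; induction M as [|M IH]; intros v; simpl.
  - split. intros [<-|[]]. simpl; split; auto; tauto.
    intros [H _]. destruct v; simpl in H; [auto|discriminate].
  - rewrite in_flat_map. split.
    + intros (i & Hi & Hv). apply in_map_iff in Hv as (v' & <- & Hv').
      apply IH in Hv' as [H1 H2]. simpl. split; [lia|]. intros j [<-|Hj]; auto.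
    + intros [H1 H2]. destruct v as [|i v']; simpl in H1; [discriminate|].
      exists i. split. apply H2; simpl; auto. apply in_map. apply IH. split. lia.
      intros j Hj; apply H2; simpl; auto.
Qed.

Fixpoint pw (w : nat -> R) (u : list nat) : R :=
  match u with [] => 1 | i :: u' => w i * pw w u' end.

Lemma pw_nonneg w u : (forall i, 0 <= w i) -> 0 <= pw w u.
Proof. intros H; induction u; simpl; [lra|]. apply Rmult_le_pos; auto. Qed.

Lemma lsum_in {T} (f : T -> R) l t : (forall t, In t l -> 0 <= f t) -> In t l -> f t <= lsum f l.
Proof.
  induction l as [|t' l IH]; intros H Ht; [destruct Ht|]. unfold lsum; simpl; fold (lsum f l).
  destruct Ht as [->|Ht].
  - assert (0 <= lsum f l) by (apply lsum_nonneg; intros; apply H; simpl; auto). lra.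
  - assert (f t <= lsum f l) by (apply IH; auto; intros; apply H; simpl; auto).
    assert (0 <= f t') by (apply H; simpl; auto). lra.
Qed.

Lemma lsum_zero {T} (f : T -> R) l : (forall t, In t l -> f t = 0) -> lsum f l = 0.
Proof. induction l; intros H; unfold lsum in *; simpl; auto. rewrite IHl. rewrite H by (simpl; auto). lra. intros; apply H; simpl; auto. Qed.

Definition Lsub (i : nat) (L : list (list nat)) : list (list nat) :=
  flat_map (fun u => match u with i' :: u' => if Nat.eqb i' i then [u'] else [] | [] => [] end) L.

Lemma lsum_indic (F : list nat) j (g : R) (w : nat -> R) : NoDup F -> 0 <= g -> (forall i, 0 <= w i) ->
  lsum (fun i => w i * (if Nat.eqb j i then g else 0)) F <= w j * g.
Proof.
  intros Hnd Hg Hw. induction Hnd as [|i F Hni Hnd IH]; unfold lsum; simpl.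
  - pose proof (Hw j). nra.
  - fold (lsum (fun i0 => w i0 * (if Nat.eqb j i0 then g else 0)) F).
    destruct (Nat.eqb_spec j i) as [<-|Hne].
    + assert (E : lsum (fun i0 => w i0 * (if Nat.eqb j i0 then g else 0)) F = lsum (fun _ => 0) F).
      { clear IH. induction F as [|i F IHF]; unfold lsum; simpl; auto.
        destruct (Nat.eqb_spec j i). subst; exfalso; apply Hni; simpl; auto.
        fold (lsum (fun i0 => w i0 * (if Nat.eqb j i0 then g else 0)) F) (lsum (fun _ : nat => 0) F).
        rewrite IHF. lra. intros Hc; apply Hni; simpl; auto. inversion Hnd; auto. }
      rewrite E. assert (E2 : lsum (fun _ : nat => 0) F = 0) by (clear; induction F; unfold lsum in *; simpl; auto; rewrite IHF; lra).
      rewrite E2. lra.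
    + lra.
Qed.

Lemma Lsub_bound (F : list nat) (w : nat -> R) L : NoDup F -> (forall i, 0 <= w i) ->
  lsum (fun i => w i * lsum (pw w) (Lsub i L)) F <= lsum (pw w) L.
Proof.
  intros Hnd Hw. induction L as [|u L IH].
  - unfold Lsub; simpl. rewrite lsum_zero. unfold lsum; simpl; lra. intros; unfold lsum; simpl; lra.
  - assert (E : forall i, lsum (pw w) (Lsub i (u :: L)) =
       (match u with j :: u' => if Nat.eqb j i then pw w u' else 0 | [] => 0 end) + lsum (pw w) (Lsub i L)).
    { intros i. unfold Lsub at 1. simpl. rewrite lsum_app. fold (Lsub i L). f_equal.
      destruct u as [|j u']; [reflexivity|]. destruct (Nat.eqb j i); unfold lsum; simpl; lra. }
    apply Rle_trans with (lsum (fun i => w i * (match u with j :: u' => if Nat.eqb j i then pw w u' else 0 | [] => 0 end)) F + lsum (fun i => w i * lsum (pw w) (Lsub i L)) F).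
    + rewrite <- lsum_plus. apply lsum_le. intros i _. rewrite E. lra.
    + change (lsum (pw w) (u :: L)) with (pw w u + lsum (pw w) L).
      assert (lsum (fun i => w i * match u with [] => 0 | j :: u' => if Nat.eqb j i then pw w u' else 0 end) F <= pw w u).
      { destruct u as [|j u'].
        - simpl. rewrite lsum_zero. lra. intros; lra.
        - simpl. apply lsum_indic; auto. apply pw_nonneg; auto. }
      lra.
Qed.

Lemma mass (F : list nat) (w : nat -> R) : NoDup F -> (forall i, 0 <= w i) -> 1 <= lsum w F ->
  forall M L, (forall v, In v (words F M) -> exists u, In u L /\ is_prefix u v) ->
  1 <= lsum (pw w) L.
Proof.
  intros Hnd Hw HF M. induction M as [|M IH]; intros L HL.
  - destruct (HL [] (or_introl eq_refl)) as (u & Hu & r & Hr).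
    destruct u; [|discriminate]. apply (lsum_in (pw w) L []); auto. intros; apply pw_nonneg; auto.
  - destruct (classic (In [] L)) as [Hn|Hn].
    + apply (lsum_in (pw w) L []); auto. intros; apply pw_nonneg; auto.
    + assert (Hsub : forall i, In i F -> 1 <= lsum (pw w) (Lsub i L)).
      { intros i Hi. apply IH. intros v Hv.
        assert (Hv' : In (i :: v) (words F (S M))).
        { apply in_words in Hv as [H1 H2]. apply in_words. simpl. split; [lia|]. intros j [<-|Hj]; auto. }
        destruct (HL _ Hv') as (u & Hu & r & Hr).
        destruct u as [|j u']; [contradiction|]. simpl in Hr. injection Hr as <- Hr.
        exists u'. split; [|exists r; auto]. unfold Lsub. apply in_flat_map. exists (i :: u').
        split; auto. rewrite Nat.eqb_refl. simpl; auto. }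
      eapply Rle_trans; [|apply (Lsub_bound F w L Hnd Hw)].
      eapply Rle_trans; [apply HF|]. apply lsum_le. intros i Hi.
      specialize (Hsub i Hi). specialize (Hw i). nra.
Qed.

Definition goodN (Ls : nat -> list (list nat)) (N : nat) (v : list nat) :=
  exists n, (n < N)%nat /\ exists u, In u (Ls n) /\ is_prefix u v.

Lemma goodN_mono Ls N N' v v' : (N <= N')%nat -> is_prefix v v' -> goodN Ls N v -> goodN Ls N' v'.
Proof.
  intros HN [r ->] (n & Hn & u & Hu & r' & ->). exists n. split; [lia|]. exists u. split; auto.
  exists (r' ++ r). rewrite app_assoc; auto.
Qed.

Lemma prefix_firstn (p v : list nat) k : is_prefix p v -> (length p <= k)%nat -> is_prefix p (firstn k v).
Proof.
  intros [r ->] Hk. rewrite firstn_app. rewrite firstn_all2 by lia. exists (firstn (k - length p) r). auto.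
Qed.

Lemma firstn_prefix (v : list nat) k : is_prefix (firstn k v) v.
Proof. exists (skipn k v). symmetry; apply firstn_skipn. Qed.

Lemma konig (F : list nat) (Ls : nat -> list (list nat)) :
  (forall al : nat -> nat, (forall k, In (al k) F) -> exists n m, In (pref al m) (Ls n)) ->
  exists N, forall v, In v (words F N) -> goodN Ls N v.
Proof.
  intros Hcov. apply NNPP. intros Hno.
  set (bad := fun w : list nat => forall N, (length w <= N)%nat ->
                 exists v, In v (words F N) /\ is_prefix w v /\ ~ goodN Ls N v).
  assert (B0 : bad []).
  { intros N _. apply NNPP. intros Hc. apply Hno. exists N. intros v Hv. apply NNPP. intros Hg.
    apply Hc. exists v. split; auto. split; auto. exists v; auto. }
  assert (Bstep : forall w, bad w -> exists i, In i F /\ bad (w ++ [i])).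
  { intros w Hw. apply NNPP. intros Hc.
    assert (Hall : forall i, In i F -> exists Ni, forall N', (Ni <= N')%nat -> forall v, In v (words F N') ->
                 is_prefix (w ++ [i]) v -> goodN Ls N' v).
    { intros i Hi. assert (Hnb : ~ bad (w ++ [i])) by (intros Hb; apply Hc; eauto).
      unfold bad in Hnb. apply not_all_ex_not in Hnb as [Ni Hni].
      apply imply_to_and in Hni as [Hlen Hni].
      exists Ni. intros N' HN' v Hv Hp.
      assert (Hv' : In (firstn Ni v) (words F Ni)).
      { apply in_words in Hv as [H1 H2]. apply in_words. split. rewrite length_firstn; lia.
        intros j Hj. apply H2. rewrite <- (firstn_skipn Ni v). apply in_or_app; auto. }
      assert (Hg : goodN Ls Ni (firstn Ni v)).
      { apply NNPP. intros Hg. apply Hni. exists (firstn Ni v). split; auto. split; auto.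
        apply prefix_firstn; auto. }
      eapply goodN_mono; [|apply firstn_prefix|exact Hg]. lia. }
    assert (Hcommon : forall F', (forall i, In i F' -> In i F) -> exists N0, forall i, In i F' ->
                 forall N', (N0 <= N')%nat -> forall v, In v (words F N') ->
                 is_prefix (w ++ [i]) v -> goodN Ls N' v).
    { induction F' as [|i F' IH]; intros Hs.
      - exists 0%nat. intros i [].
      - destruct IH as [N1 H1]. intros j Hj; apply Hs; simpl; auto.
        destruct (Hall i (Hs i (or_introl eq_refl))) as [N2 H2].
        exists (Nat.max N1 N2). intros j [<-|Hj] N' HN'.
        + apply H2; lia.
        + apply H1; auto; lia. }
    destruct (Hcommon F (fun i H => H)) as [N0 HN0].
    destruct (Hw (Nat.max N0 (S (length w))) ltac:(lia)) as (v & Hv & [r ->] & Hng).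
    apply Hng. apply in_words in Hv as [Hl Hin]. rewrite length_app in Hl.
    destruct r as [|i r]; [simpl in Hl; lia|].
    apply (HN0 i). apply Hin. apply in_or_app; simpl; auto. lia.
    apply in_words. split; auto. rewrite length_app; auto.
    exists r. rewrite <- app_assoc. reflexivity. }
  assert (Hnext : forall w, {i : nat | bad w -> In i F /\ bad (w ++ [i])}).
  { intros w. apply constructive_indefinite_description.
    destruct (classic (bad w)) as [Hb|Hb].
    - destruct (Bstep w Hb) as [i Hi]. exists i; auto.
    - exists 0%nat. intros; contradiction. }
  set (next := fun w => proj1_sig (Hnext w)).
  set (W := fix W (m : nat) : list nat := match m with O => [] | S m' => W m' ++ [next (W m')] end).
  set (al := fun k => next (W k)).
  assert (HW : forall m, bad (W m) /\ pref al m = W m).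
  { induction m as [|m [IH1 IH2]]; simpl; [split; auto|].
    destruct (proj2_sig (Hnext (W m)) IH1) as [_ Hb]. split. exact Hb.
    rewrite IH2. reflexivity. }
  assert (Hal : forall k, In (al k) F).
  { intros k. destruct (HW k) as [Hb _]. exact (proj1 (proj2_sig (Hnext (W k)) Hb)). }
  destruct (Hcov al Hal) as (n & m & Hin).
  set (N := Nat.max (S n) m).
  destruct (HW N) as [Hb HeqN].
  destruct (Hb N) as (v & Hv & Hp & Hng).
  { rewrite <- HeqN, pref_length. lia. }
  apply Hng. assert (v = W N).
  { destruct Hp as [r ->]. apply in_words in Hv as [Hl _]. rewrite length_app in Hl.
    rewrite <- HeqN, pref_length in Hl. destruct r; [rewrite app_nil_r; auto|simpl in Hl; lia]. }
  subst v. exists n. split; [lia|]. exists (pref al m). split; auto.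
  rewrite <- HeqN. rewrite <- (pref_firstn al N m) by lia. apply firstn_prefix.
Qed.

Lemma Rabs_le_inv' x b : Rabs x <= b -> -b <= x <= b.
Proof. unfold Rabs. destruct (Rcase_abs x); intros; lra. Qed.

Lemma Rpower_1_base s : Rpower 1 s = 1.
Proof. unfold Rpower. rewrite ln_1, Rmult_0_r, exp_0. reflexivity. Qed.

Lemma Rpower_pos x s : 0 < Rpower x s.
Proof. unfold Rpower. apply exp_pos. Qed.

Lemma exp_le_mono x y : x <= y -> exp x <= exp y.
Proof. intros [H|H]. left; apply exp_increasing; auto. subst; lra. Qed.

Lemma ln_le_mono x y : 0 < x -> x <= y -> ln x <= ln y.
Proof. intros H [H1|H1]. left; apply ln_increasing; auto. subst; lra. Qed.

Lemma Rpower_le_neg x y e : 0 < x -> x <= y -> e <= 0 -> Rpower y e <= Rpower x e.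
Proof.
  intros Hx Hxy He. unfold Rpower. apply exp_le_mono.
  pose proof (ln_le_mono x y Hx Hxy). nra.
Qed.

Lemma Rpower_le_pos x y e : 0 < x -> x <= y -> 0 <= e -> Rpower x e <= Rpower y e.
Proof.
  intros Hx Hxy He. unfold Rpower. apply exp_le_mono.
  pose proof (ln_le_mono x y Hx Hxy). nra.
Qed.

Lemma Rpower_split x s : 0 < x -> Rpower x s = x * Rpower x (s - 1).
Proof.
  intros Hx. replace s with (1 + (s - 1)) at 1 by ring. rewrite Rpower_plus, Rpower_1; auto.
Qed.

Lemma pw_Rpower q s u : (forall i, 0 < q i) -> pw (fun i => Rpower (q i) s) u = Rpower (qw q u) s.
Proof.
  intros Hq. induction u as [|i u IH]; simpl. symmetry; apply Rpower_1_base.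
  rewrite IH. apply Rpower_mult_distr; auto. apply qw_pos; auto.
Qed.

Lemma qw_lower q F rmin d u : (forall i, 0 < q i) -> 0 < rmin -> (forall i, In i F -> rmin <= q i) ->
  d < 1 -> stopw q d u -> (forall i, In i u -> In i F) -> rmin * d <= qw q u.
Proof.
  intros Hq Hr HF Hd1 [S1 S2] Hu.
  destruct (list_eq_dec Nat.eq_dec u []) as [->|Hne].
  - simpl in S1. lra.
  - destruct (exists_last Hne) as (u' & i & ->).
    specialize (S2 (length u')). rewrite firstn_app, firstn_all, Nat.sub_diag, app_nil_r in S2.
    rewrite length_app in S2. simpl in S2. specialize (S2 ltac:(lia)).
    rewrite qw_app. simpl. rewrite Rmult_1_r.
    assert (rmin <= q i) by (apply HF, Hu, in_or_app; simpl; auto).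
    assert (0 < qw q u') by (apply qw_pos; auto).
    destruct (Rle_dec 0 d). 
    + apply Rle_trans with (qw q u' * rmin). nra. apply Rmult_le_compat_l; lra.
    + assert (0 < qw q u' * q i) by (apply Rmult_lt_0_compat; auto). nra.
Qed.

Lemma cyl_pack_bound q a F s rmin d (U : R -> Prop) (L : list (list nat)) :
  (forall i, 0 < q i) -> (forall i, 0 <= a i /\ a i + q i <= 1) ->
  (forall i j, i <> j -> forall x, ~ ((a i < x < a i + q i) /\ (a j < x < a j + q j))) ->
  0 < s <= 1 -> 0 < rmin -> (forall i, In i F -> rmin <= q i) -> 0 < d < 1 ->
  (forall y y', U y -> U y' -> Rabs (y - y') <= d) -> NoDup L ->
  (forall u, In u L -> stopw q d u /\ (forall i, In i u -> In i F) /\ exists y, U y /\ incyl q a u y) ->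
  lsum (fun u => Rpower (qw q u) s) L <= 4 * Rpower rmin (s - 1) * Rpower d s.
Proof.
  intros Hq Ha Hdj Hs Hr HF Hd HU HL HLP.
  pose proof (Rpower_pos rmin (s-1)). pose proof (Rpower_pos d s).
  destruct L as [|u0 L0] eqn:EL.
  - unfold lsum; simpl. nra.
  - rewrite <- EL in *. destruct (HLP u0 ltac:(rewrite EL; simpl; auto)) as (_ & _ & y0 & Hy0 & _).
    set (c := Rpower (rmin * d) (s - 1)).
    assert (Step2 : forall u, In u L -> Rpower (qw q u) s <= qw q u * c).
    { intros u Hu. destruct (HLP u Hu) as (Hst & Hlet & _).
      pose proof (qw_lower q F rmin d u Hq Hr HF (proj2 Hd) Hst Hlet).
      pose proof (qw_pos q u Hq).
      rewrite Rpower_split by auto. apply Rmult_le_compat_l. lra.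
      apply Rpower_le_neg; try lra. nra. }
    assert (Step3 : lsum (qw q) L <= (y0 + 2 * d) - (y0 - 2 * d)).
    { apply (@packing (list nat) (fun u => wcomp q a u 0) (qw q) (length L)); auto; try lra.
      - intros u Hu. destruct (HLP u Hu) as ([S1 _] & _ & y & Hy & Hc).
        pose proof (HU y y0 Hy Hy0). unfold incyl in Hc. apply Rabs_le_inv' in H1.
        pose proof (qw_pos q u Hq). repeat split; lra.
      - intros u u' Hu Hu' Hne y.
        destruct (HLP u Hu) as (Hs1 & _). destruct (HLP u' Hu') as (Hs2 & _).
        apply disj_cyl; auto.
        + apply (stopw_incomp q d); auto.
        + apply (stopw_incomp q d); auto. }
    apply Rle_trans with (lsum (fun u => c * qw q u) L).
    + apply lsum_le. intros u Hu. rewrite Rmult_comm. apply Step2; auto.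
    + rewrite lsum_scal. 
      assert (Ec : c * (4 * d) = 4 * Rpower rmin (s - 1) * Rpower d s).
      { unfold c. rewrite <- Rpower_mult_distr by lra. rewrite (Rpower_split d s) by lra. ring. }
      rewrite <- Ec. assert (0 < c) by apply Rpower_pos.
      apply Rmult_le_compat_l; lra.
Qed.

Lemma point_exists q a al : (forall i, 0 < q i) -> (forall i, 0 <= a i /\ a i + q i <= 1) ->
  exists x, forall m, incyl q a (pref al m) x.
Proof.
  intros Hq Ha.
  set (left := fun m => wcomp q a (pref al m) 0).
  assert (Lin : forall m, incyl q a (pref al m) (left m)).
  { intros m. unfold incyl, left. pose proof (qw_pos q (pref al m) Hq). lra. }
  set (E := fun y => exists m, y = left m).
  assert (Hb : bound E).
  { exists 1. intros y [m ->]. destruct (cyl_in01 q a (pref al m) Hq Ha). pose proof (qw_pos q (pref al m) Hq).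
    unfold left; lra. }
  destruct (completeness E Hb (ex_intro _ (left 0%nat) (ex_intro _ 0%nat eq_refl))) as [x [Hub Hlub]].
  exists x. intros m. split.
  - apply Hub. exists m; auto.
  - apply Hlub. intros y [m' ->].
    destruct (Nat.le_ge_cases m m') as [Hle|Hle].
    + exact (proj2 (incyl_pref_mono q a al m m' _ Hq Ha Hle (Lin m'))).
    + pose proof (proj1 (incyl_pref_mono q a al m' m _ Hq Ha Hle (Lin m))).
      pose proof (qw_pos q (pref al m) Hq). unfold left in *. lra.
Qed.

Lemma exists_least (P : nat -> Prop) : (exists n, P n) -> exists n, P n /\ forall k, (k < n)%nat -> ~ P k.
Proof.
  intros [n Hn]. induction n as [n IH] using (well_founded_induction Wf_nat.lt_wf).
  destruct (classic (exists k, (k < n)%nat /\ P k)) as [(k & Hk & Pk)|Hno].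
  - apply (IH k Hk Pk).
  - exists n. split; auto. intros k Hk Pk. apply Hno; eauto.
Qed.

Lemma qw_bound q F Rm u : (forall i, 0 < q i) -> (forall i, In i F -> 0 < q i <= Rm) -> (forall i, In i u -> In i F) ->
  qw q u <= Rm ^ (length u).
Proof.
  intros Hq HF. induction u as [|i u IH]; intros Hu; simpl; [lra|].
  destruct (HF i (Hu i (or_introl eq_refl))).
  assert (qw q u <= Rm ^ length u) by (apply IH; intros; apply Hu; simpl; auto).
  assert (0 <= qw q u) by (left; apply qw_pos; auto).
  apply Rmult_le_compat; lra.
Qed.

Lemma stopw_len q F Rm d N u : (forall i, 0 < q i) -> (forall i, In i F -> 0 < q i <= Rm) -> Rm ^ N <= d ->
  stopw q d u -> (forall i, In i u -> In i F) -> (length u <= N)%nat.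
Proof.
  intros Hq HF HN [S1 S2] Hu. destruct (Nat.le_gt_cases (length u) N) as [Hle|Hlt]; [exact Hle|]. exfalso.
  specialize (S2 N Hlt).
  assert (qw q (firstn N u) <= Rm ^ N).
  { replace N with (length (firstn N u)) at 2 by (rewrite length_firstn; lia).
    apply qw_bound with F; auto. intros i Hi. apply Hu. rewrite <- (firstn_skipn N u). apply in_or_app; auto. }
  lra.
Qed.

Definition allw (F : list nat) (N : nat) : list (list nat) := flat_map (words F) (seq 0 (S N)).

Lemma in_allw F N u : (length u <= N)%nat -> (forall i, In i u -> In i F) -> In u (allw F N).
Proof.
  intros Hl Hu. unfold allw. apply in_flat_map. exists (length u). split.
  apply in_seq; lia. apply in_words; auto.
Qed.

Lemma lsum_concat {T} (g : T -> R) (Ls : nat -> list T) N :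
  lsum g (concat (map Ls (seq 0 N))) = fs (fun n => lsum g (Ls n)) N.
Proof.
  induction N as [|N IH]; [unfold lsum; simpl; auto|].
  rewrite seq_S, map_app, concat_app, lsum_app, IH. cbn [fs map concat]. rewrite app_nil_r. reflexivity.
Qed.

Lemma fs_geom N : fs (fun n => (/2) ^ (S n)) N = 1 - (/2) ^ N.
Proof. induction N; [simpl; lra|]. cbn [fs]. rewrite IHN. simpl. field. Qed.

Lemma pow_pos' x n : 0 < x -> 0 < x ^ n.
Proof. intros; apply pow_lt; auto. Qed.

Lemma fmin_pos (q : nat -> R) l : (forall i, 0 < q i) -> 0 < fold_right (fun i acc => Rmin (q i) acc) 1 l.
Proof. intros H; induction l; simpl; [lra|]. apply Rmin_glb_lt; auto. Qed.

Lemma fmin_le (q : nat -> R) l i : In i l -> fold_right (fun i acc => Rmin (q i) acc) 1 l <= q i.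
Proof.
  induction l as [|j l IH]; simpl; [tauto|]. intros [->|H].
  - apply Rmin_l.
  - eapply Rle_trans; [apply Rmin_r|]. auto.
Qed.

Lemma fmax_ge (q : nat -> R) l i : In i l -> q i <= fold_right (fun i acc => Rmax (q i) acc) 0 l.
Proof.
  induction l as [|j l IH]; simpl; [tauto|]. intros [->|H].
  - apply Rmax_l.
  - eapply Rle_trans; [|apply Rmax_r]. auto.
Qed.

Lemma fmax_lt (q : nat -> R) l : (forall i, q i < 1) -> fold_right (fun i acc => Rmax (q i) acc) 0 l < 1.
Proof. intros H; induction l; simpl; [lra|]. apply Rmax_lub_lt; auto. Qed.

Lemma allw_letters F N u : In u (allw F N) -> forall i, In i u -> In i F.
Proof.
  unfold allw. intros Hu. apply in_flat_map in Hu as (M & _ & Hu). apply in_words in Hu as [_ H]. exact H.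
Qed.

Lemma lb_not_null q a F s :
  (forall i, 0 < q i) -> (forall i, q i < 1) ->
  (forall i, 0 <= a i /\ a i + q i <= 1) ->
  (forall i j, i <> j -> forall x, ~ ((a i < x < a i + q i) /\ (a j < x < a j + q j))) ->
  NoDup F -> 0 < s <= 1 -> 1 <= lsum (fun i => Rpower (q i) s) F ->
  ~ null s (GLS_set q a (fun i => In i F)).
Proof.
  intros Hq Hq1 Ha Hdj HF Hs Hsum Hnull.
  destruct F as [|i0 F0] eqn:EF. { unfold lsum in Hsum; simpl in Hsum; lra. }
  rewrite <- EF in *. assert (Hi0 : In i0 F) by (rewrite EF; simpl; auto).
  set (rmin := fold_right (fun i acc => Rmin (q i) acc) 1 F).
  assert (Hr : 0 < rmin) by (apply fmin_pos; auto).
  assert (HrF : forall i, In i F -> rmin <= q i) by (intros; apply fmin_le; auto).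
  set (Rm := fold_right (fun i acc => Rmax (q i) acc) 0 F).
  assert (HRm1 : Rm < 1) by (apply fmax_lt; auto).
  assert (HRmF : forall i, In i F -> 0 < q i <= Rm) by (intros; split; [auto|apply fmax_ge; auto]).
  assert (HRm0 : 0 < Rm) by (destruct (HRmF i0 Hi0); lra).
  set (K := 4 * Rpower rmin (s - 1)).
  assert (HK : 4 <= K).
  { unfold K. assert (1 <= Rpower rmin (s - 1)).
    { pose proof (Rpower_1_base (s - 1)) as E1. apply Rle_trans with (Rpower 1 (s - 1)); [lra|].
      apply Rpower_le_neg; try lra.
      pose proof (HrF i0 Hi0). pose proof (Hq1 i0). lra. }
    lra. }
  set (eta := / (4 * K)).
  assert (Heta : 0 < eta /\ eta <= 1/16).
  { unfold eta. split. apply Rinv_0_lt_compat; lra.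
    apply Rmult_le_reg_l with (4 * K); [lra|]. rewrite Rinv_r by lra. lra. }
  destruct (Hnull (1/2) ltac:(lra) eta ltac:(lra)) as (U & (HU1 & HU2 & HU3) & HU4).
  set (t := fun n => Rmax 0 (real (diam (U n)))).
  assert (Ht : forall n, 0 <= t n <= 1/2).
  { intros n. specialize (HU1 n). unfold t. destruct (diam (U n)); simpl in *; try contradiction;
    unfold Rmax; destruct (Rle_dec 0 _); lra. }
  set (et := fun n => Rpower (eta * (/2) ^ (S n)) (1 / s)).
  assert (Het : forall n, 0 < et n < 1 /\ Rpower (et n) s = eta * (/2) ^ (S n)).
  { intros n. assert (Hx : 0 < eta * (/2) ^ (S n) < 1).
    { assert (0 < (/2) ^ (S n)) by (apply pow_lt; lra).
      assert (Hp1 : forall m, 0 < (/2)^m <= 1). { induction m; simpl; [lra|]. nra. }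
      pose proof (Hp1 (S n)).
      split; nra. }
    split; [split|].
    - apply Rpower_pos.
    - unfold et, Rpower. apply Rlt_le_trans with (exp 0); [apply exp_increasing|rewrite exp_0; lra].
      assert (L1 : ln (eta * (/2) ^ (S n)) < 0) by (rewrite <- ln_1; apply ln_increasing; lra).
      assert (L2 : 0 < 1 / s) by (apply Rdiv_lt_0_compat; lra).
      pose proof (Rmult_lt_compat_l (1/s) _ _ L2 L1) as L3. rewrite Rmult_0_r in L3. exact L3.
    - unfold et. rewrite Rpower_mult. replace (1 / s * s) with 1 by (field; lra).
      apply Rpower_1. lra. }
  set (d := fun n => Rmax (t n) (et n)).
  assert (Hd : forall n, 0 < d n < 1 /\ t n <= d n /\ Rpower (d n) s <= dterm s (U n) + eta * (/2) ^ (S n)).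
  { intros n. destruct (Het n) as [[E1 E2] E3]. destruct (Ht n) as [T1 T2].
    pose proof (dterm_nonneg s (U n)) as D0.
    unfold d, Rmax. destruct (Rle_dec (t n) (et n)).
    - split; [lra|split; [lra|]]. rewrite E3. lra.
    - split; [lra|split; [lra|]]. change (dterm s (U n)) with (powp (t n) s).
      rewrite powp_pos by lra. assert (0 < eta * (/2) ^ S n) by (rewrite <- E3; apply Rpower_pos). lra. }
  assert (HN : forall n, exists N, Rm ^ N <= d n).
  { intros n. destruct (pow_lt_1_zero Rm ltac:(rewrite Rabs_right; lra) (d n) ltac:(apply (Hd n))) as [N HN].
    exists N. specialize (HN N (le_n N)). eapply Rle_trans; [apply Rle_abs|]. lra. }
  set (Nb := fun n => proj1_sig (constructive_indefinite_description _ (HN n))).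
  assert (HNb : forall n, Rm ^ (Nb n) <= d n) by (intros n; exact (proj2_sig (constructive_indefinite_description _ (HN n)))).
  set (Pn := fun n u => stopw q (d n) u /\ exists y, U n y /\ incyl q a u y).
  set (Ls := fun n => nodup (list_eq_dec Nat.eq_dec)
       (filter (fun u => if excluded_middle_informative (Pn n u) then true else false) (allw F (Nb n)))).
  assert (HLs : forall n u, In u (Ls n) <-> In u (allw F (Nb n)) /\ Pn n u).
  { intros n u. unfold Ls. rewrite nodup_In, filter_In.
    destruct (excluded_middle_informative (Pn n u)); split; intros [H1 H2]; auto; try discriminate; contradiction. }
  assert (Hcov : forall al : nat -> nat, (forall k, In (al k) F) -> exists n m, In (pref al m) (Ls n)).
  { intros al Hal. destruct (point_exists q a al Hq Ha) as [x Hx].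
    assert (HxC : GLS_set q a (fun i => In i F) x).
    { exists al. split; auto. intros n. apply gls_cyl_iff; auto. }
    destruct (HU2 x HxC) as [n Hn].
    assert (Hlet : forall m i, In i (pref al m) -> In i F).
    { intros m i Hi. destruct (pref_in al m i Hi) as (k & _ & ->). auto. }
    destruct (exists_least (fun m => qw q (pref al m) <= d n)) as (m & Hm & Hmin).
    { exists (Nb n). eapply Rle_trans; [|apply HNb]. rewrite <- (pref_length al (Nb n)) at 2.
      apply qw_bound with F; auto. apply Hlet. }
    assert (Hst : stopw q (d n) (pref al m)).
    { split; auto. intros j Hj. rewrite pref_length in Hj. rewrite pref_firstn by lia.
      apply Rnot_le_lt. apply Hmin; auto. }
    exists n, m. apply HLs. split.
    - apply in_allw; [|apply Hlet]. apply (stopw_len q F Rm (d n)); auto. apply Hlet.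
    - split; auto. exists x. split; auto. }
  destruct (konig F Ls Hcov) as [N HN'].
  set (w := fun i => Rpower (q i) s).
  assert (Hmass : 1 <= lsum (pw w) (concat (map Ls (seq 0 N)))).
  { apply (mass F w HF (fun i => Rlt_le _ _ (Rpower_pos _ _)) Hsum N).
    intros v Hv. destruct (HN' v Hv) as (n & Hn & u & Hu & Hp). exists u. split; auto.
    apply in_concat. exists (Ls n). split; auto. apply in_map. apply in_seq. lia. }
  rewrite lsum_concat in Hmass.
  assert (Hb : forall n, lsum (pw w) (Ls n) <= K * Rpower (d n) s).
  { intros n. apply Rle_trans with (lsum (fun u => Rpower (qw q u) s) (Ls n)).
    { apply lsum_le. intros u _. unfold w. rewrite pw_Rpower; auto; lra. }
    unfold K. apply (cyl_pack_bound q a F s rmin (d n) (U n) (Ls n)); auto; try apply (Hd n).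
    - intros y y' Hy Hy'. destruct (diam_fin (U n) y (1/2) Hy (HU1 n)) as (t0 & Et0 & Ht0).
      pose proof (diam_ge (U n) y y' Hy Hy') as G. rewrite Et0 in G. simpl in G.
      destruct (Hd n) as (_ & Htd & _). unfold t in Htd. rewrite Et0 in Htd. simpl in Htd.
      rewrite Rmax_right in Htd by lra. lra.
    - apply NoDup_nodup.
    - intros u Hu. apply HLs in Hu as [Hu1 [Hu2 Hu3]]. split; auto. split; auto.
      apply (allw_letters F (Nb n)); auto. }
  assert (Hfs : fs (fun n => lsum (pw w) (Ls n)) N <= K * (fs (fun n => dterm s (U n)) N + eta * fs (fun n => (/2) ^ (S n)) N)).
  { rewrite <- fs_scal, <- fs_plus, <- fs_scal. apply fs_le. intros n.
    eapply Rle_trans; [apply Hb|]. apply Rmult_le_compat_l; [lra|]. apply (Hd n). }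
  rewrite fs_geom in Hfs.
  assert (Hser : fs (fun n => dterm s (U n)) N <= eta).
  { eapply Rle_trans; [apply nn_series_ge_partial; auto|exact HU4]. intros; apply dterm_nonneg. }
  assert (0 < (/2) ^ N) by (apply pow_lt; lra).
  assert (E : K * (eta + eta) = 1/2) by (unfold eta; field; lra).
  assert (K * (fs (fun n => dterm s (U n)) N + eta * (1 - (/2) ^ N)) <= K * (eta + eta)).
  { apply Rmult_le_compat_l; [lra|]. nra. }
  lra.
Qed.

Definition image (f : R -> R) (A : R -> Prop) : R -> Prop := fun y => exists x, A x /\ y = f x.

Lemma fs_add a M B : fs a (M + B) = fs a M + fs (fun j => a (M + j)%nat) B.
Proof.
  induction B as [|B IH]; simpl. rewrite Nat.add_0_r; lra.
  rewrite Nat.add_succ_r. simpl. rewrite IH. lra.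
Qed.

Lemma fs_blocks a K B : fs a (K * B) = fs (fun n => fs (fun j => a (n * B + j)%nat) B) K.
Proof.
  induction K as [|K IH]; simpl; auto.
  replace (B + K * B)%nat with (K * B + B)%nat by lia. rewrite fs_add, IH. reflexivity.
Qed.

Lemma divmod_blocks B n j : (j < B)%nat -> ((n * B + j) / B = n /\ (n * B + j) mod B = j)%nat.
Proof.
  intros Hj. assert (HB : B <> 0%nat) by lia.
  assert (E1 : ((n * B + j) / B = n)%nat).
  { rewrite Nat.div_add_l by auto. rewrite Nat.div_small by auto. lia. }
  split; auto. pose proof (Nat.div_mod_eq (n * B + j) B) as E2. rewrite E1 in E2. lia.
Qed.

Lemma gls_in01 q a al x : gls_cyl q a al 0 x -> 0 <= x <= 1.
Proof. intros (t & Ht & ->). simpl. auto. Qed.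

Lemma gls_shift q a (W : nat -> Prop) x : (forall i, 0 < q i) ->
  GLS_set q a W x -> exists al, W (al 0%nat) /\
     GLS_set q a W ((x - a (al 0%nat)) / q (al 0%nat)) /\
     exists t, 0 <= t <= 1 /\ x = a (al 0%nat) + q (al 0%nat) * t.
Proof.
  intros Hq (al & HW & Hc). exists al. split; auto.
  pose proof (Hq (al 0%nat)) as Hq0.
  split.
  - exists (fun k => al (S k)). split; auto. intros n.
    destruct (Hc (S n)) as (t & Ht & Ex). exists t. split; auto.
    rewrite gls_comp_pref, pref_S in Ex. simpl in Ex. unfold gls_f in Ex.
    rewrite gls_comp_pref. rewrite Ex. field. lra.
  - destruct (Hc 1%nat) as (t & Ht & Ex). exists t. split; auto.
Qed.

Lemma Rbar_le_fin_trans (x : R) (y : Rbar) (z : R) : Rbar_le x y -> Rbar_le y z -> x <= z.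
Proof. intros H1 H2. destruct y; simpl in *; try contradiction; lra. Qed.

Lemma dterm_image q a j s (A : R -> Prop) : 0 < q j -> 0 < s ->
  (forall x y, A x -> A y -> Rbar_le (Rabs (x - y)) (diam A)) ->
  (exists d : R, Rbar_le (diam A) d) ->
  dterm s (image (gls_f q a j) A) <= Rpower (q j) s * dterm s A.
Proof.
  intros Hq Hs _ [dd Hdd].
  destruct (classic (exists x, A x)) as [[x0 Hx0]|Hn].
  - destruct (diam_fin A x0 dd Hx0 Hdd) as (t & Et & Ht).
    assert (Hb : forall x y, image (gls_f q a j) A x -> image (gls_f q a j) A y -> Rabs (x - y) <= q j * t).
    { intros x y (x' & Hx' & ->) (y' & Hy' & ->). unfold gls_f.
      replace (a j + q j * x' - (a j + q j * y')) with (q j * (x' - y')) by ring.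
      rewrite Rabs_mult, Rabs_right by lra. apply Rmult_le_compat_l; [lra|].
      pose proof (diam_ge A x' y' Hx' Hy') as G. rewrite Et in G. exact G. }
    eapply Rle_trans; [apply dterm_le; [lra| |exact Hb]; nra|].
    rewrite (dterm_fin s A t Et) by lra.
    destruct (Rle_dec t 0).
    + assert (t = 0) by lra. subst. rewrite Rmult_0_r. unfold powp. destruct (Rle_dec 0 0); [|lra]. lra.
    + rewrite !powp_pos by nra. rewrite Rpower_mult_distr by lra. lra.
  - rewrite dterm_empty. apply Rmult_le_pos; [left; apply Rpower_pos|apply dterm_nonneg].
    intros y (x & Hx & _). apply Hn; eauto.
Qed.

Lemma ub_step q a (V : nat -> bool) s delta (U : nat -> R -> Prop) eps' :
  (forall i, 0 < q i) -> (forall i, q i <= 1) -> 0 < s -> 0 < delta -> 0 < eps' ->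
  ex_series (fun i => if V i then Rpower (q i) s else 0) ->
  valid_cover s delta (GLS_set q a (fun i => V i = true)) U ->
  exists W, valid_cover s delta (GLS_set q a (fun i => V i = true)) W /\
    Series (fun n => dterm s (W n)) <=
      Series (fun i => if V i then Rpower (q i) s else 0) * Series (fun n => dterm s (U n)) + eps'.
Proof.
  intros Hq Hq1 Hs Hd He Hg (HU1 & HU2 & HU3).
  set (g := fun i => if V i then Rpower (q i) s else 0) in *.
  set (Sg := Series g).
  assert (Hg0 : forall i, 0 <= g i).
  { intros i. unfold g. destruct (V i); [left; apply Rpower_pos|lra]. }
  assert (HdU0 : forall n, 0 <= dterm s (U n)) by (intros; apply dterm_nonneg).
  destruct (proj2 (is_lim_seq_spec g 0) (ex_series_lim_0 g Hg) (mkposreal _ (Rpower_pos delta s))) as [N1 HN1].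
  assert (Hsc := Series_correct g Hg).
  destruct (proj2 (is_lim_seq_spec (sum_n g) Sg) Hsc (mkposreal _ He)) as [n0 Hn0].
  set (N := Nat.max N1 (S n0)).
  assert (Htail : forall M, fs (fun n => g (N + n)%nat) M <= eps').
  { intros M. pose proof (nn_series_ge_partial g (N + M) Hg0 Hg) as A1.
    rewrite fs_add in A1. specialize (Hn0 n0 (le_n _)). simpl in Hn0. rewrite sum_n_fs in Hn0.
    pose proof (fs_mono g (S n0) N Hg0 ltac:(lia)). fold Sg in A1.
    apply Rabs_def2 in Hn0. lra. }
  set (B := S N).
  set (W := fun m => let n := (m / B)%nat in let j := (m mod B)%nat in
      if Nat.ltb j N then (if V j then image (gls_f q a j) (U n) else (fun _ => False))
      else (if V (N + n)%nat then (fun y => a (N + n)%nat <= y <= a (N + n)%nat + q (N + n)%nat) else (fun _ => False))).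
  set (c := fun m => let n := (m / B)%nat in let j := (m mod B)%nat in
      if Nat.ltb j N then g j * dterm s (U n) else g (N + n)%nat).
  assert (Hc0 : forall m, 0 <= c m).
  { intros m. unfold c. destruct (Nat.ltb _ _); [apply Rmult_le_pos|]; auto. }
  assert (Hdiam_img : forall j n, Rbar_le (diam (image (gls_f q a j) (U n))) delta).
  { intros j n. apply diam_le. intros x y (x' & Hx' & ->) (y' & Hy' & ->). unfold gls_f.
    replace (a j + q j * x' - (a j + q j * y')) with (q j * (x' - y')) by ring.
    rewrite Rabs_mult, Rabs_right by (specialize (Hq j); lra).
    pose proof (Rbar_le_fin_trans _ _ _ (diam_ge (U n) x' y' Hx' Hy') (HU1 n)).
    pose proof (Rabs_pos (x' - y')). specialize (Hq j); specialize (Hq1 j). nra. }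
  assert (Hempty : Rbar_le (diam (fun _ : R => False)) delta /\ forall t, 0 <= t -> dterm s (fun _ : R => False) <= t).
  { split. apply diam_le. intros x y []. intros t Ht. rewrite dterm_empty; auto. }
  assert (Hbd : forall m, Rbar_le (diam (W m)) delta /\ dterm s (W m) <= c m).
  { intros m. unfold W, c. set (n := (m / B)%nat). set (j := (m mod B)%nat).
    destruct (Nat.ltb_spec j N) as [Hj|Hj].
    - destruct (V j) eqn:EV.
      + split; auto. unfold g. rewrite EV. rewrite Rmult_comm.
        rewrite Rmult_comm. apply dterm_image; auto.
        intros; apply diam_ge; auto. exists delta; auto.
      + split; [apply Hempty|]. apply Hempty. apply Rmult_le_pos; auto.
    - destruct (V (N + n)%nat) eqn:EV.
      + set (i := (N + n)%nat) in *.
        assert (Hqi : q i <= delta).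
        { destruct (Rle_dec (q i) delta) as [|Hn]; auto. exfalso.
          specialize (HN1 i ltac:(unfold i, N; lia)). simpl in HN1.
          unfold g in HN1. rewrite EV in HN1. rewrite Rminus_0_r, Rabs_right in HN1 by (left; apply Rpower_pos).
          assert (Rpower delta s <= Rpower (q i) s) by (apply Rpower_le_pos; lra). lra. }
        split.
        * apply diam_le. intros x y Hx Hy. apply Rabs_le. lra.
        * unfold g. rewrite EV. rewrite <- (powp_pos (q i) s) by auto.
          apply dterm_le; [lra|left; auto|]. intros x y Hx Hy. apply Rabs_le. lra.
      + split; [apply Hempty|]. apply Hempty. auto. }
  assert (Hpart : forall M, fs (fun m => dterm s (W m)) M <= Sg * Series (fun n => dterm s (U n)) + eps').
  { intros M. eapply Rle_trans. { apply fs_le. intros m. apply (Hbd m). }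
    eapply Rle_trans. { apply (fs_mono c M (M * B)); auto. unfold B. nia. }
    rewrite fs_blocks.
    assert (Hblk : forall n, fs (fun j => c (n * B + j)%nat) B = fs g N * dterm s (U n) + g (N + n)%nat).
    { intros n. unfold B. cbn [fs]. f_equal.
      - rewrite Rmult_comm, <- fs_scal. apply fs_ext. intros j Hj.
        unfold c. destruct (divmod_blocks (S N) n j ltac:(lia)) as [E1 E2]. fold B in E1, E2.
        replace (n * S N + j)%nat with (n * B + j)%nat by reflexivity.
        rewrite E1, E2. destruct (Nat.ltb_spec j N); [|lia]. lra.
      - unfold c. destruct (divmod_blocks (S N) n N ltac:(lia)) as [E1 E2]. fold B in E1, E2.
        replace (n * S N + N)%nat with (n * B + N)%nat by reflexivity.
        rewrite E1, E2. destruct (Nat.ltb_spec N N); [lia|]. reflexivity. }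
    rewrite (fs_ext _ (fun n => fs g N * dterm s (U n) + g (N + n)%nat)) by (intros; apply Hblk).
    rewrite fs_plus, fs_scal.
    assert (A1 : fs g N <= Sg) by (apply nn_series_ge_partial; auto).
    assert (A2 : fs (fun n => dterm s (U n)) M <= Series (fun n => dterm s (U n))) by (apply nn_series_ge_partial; auto).
    assert (0 <= fs g N) by (apply fs_nonneg; auto).
    assert (0 <= fs (fun n => dterm s (U n)) M) by (apply fs_nonneg; auto).
    pose proof (Htail M). 
    assert (fs g N * fs (fun n => dterm s (U n)) M <= Sg * Series (fun n => dterm s (U n))) by (apply Rmult_le_compat; auto).
    lra. }
  destruct (nn_series_bounded (fun m => dterm s (W m)) _ (fun m => dterm_nonneg s (W m)) Hpart) as [Hex Hle].
  exists W. split; [split; [|split]|]; auto.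
  - intros m. apply (Hbd m).
  - intros x Hx. destruct (gls_shift q a _ x Hq Hx) as (al & HV & Hy & t & Ht & Ex).
    set (i := al 0%nat) in *. set (y := (x - a i) / q i) in *.
    destruct (Nat.ltb_spec i N) as [Hi|Hi].
    + destruct (HU2 y Hy) as [n Hn]. exists (n * B + i)%nat.
      unfold W. destruct (divmod_blocks B n i ltac:(unfold B; lia)) as [E1 E2].
      rewrite E1, E2. destruct (Nat.ltb_spec i N); [|lia]. rewrite HV.
      exists y. split; auto. unfold y, gls_f. pose proof (Hq i). field. lra.
    + exists ((i - N) * B + N)%nat.
      unfold W. destruct (divmod_blocks B (i - N) N ltac:(unfold B; lia)) as [E1 E2].
      rewrite E1, E2. destruct (Nat.ltb_spec N N); [lia|].
      replace (N + (i - N))%nat with i by lia. rewrite HV. pose proof (Hq i). split; nra.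
Qed.

Lemma fs_step_const (p : R) N0 M :
  fs (fun n => if Nat.leb n N0 then p else 0) M = INR (Nat.min M (S N0)) * p.
Proof.
  induction M as [|M IH]; [simpl; lra|]. cbn [fs]. rewrite IH.
  destruct (Nat.leb_spec M N0).
  - replace (Nat.min (S M) (S N0)) with (S M) by lia. replace (Nat.min M (S N0)) with M by lia.
    rewrite (S_INR M). lra.
  - replace (Nat.min (S M) (S N0)) with (S N0) by lia. replace (Nat.min M (S N0)) with (S N0) by lia. lra.
Qed.

Lemma base_cover q a (W : nat -> Prop) s delta : 0 < s -> 0 < delta ->
  exists U, valid_cover s delta (GLS_set q a W) U.
Proof.
  intros Hs Hd. destruct (INR_archimed delta 1 Hd) as [N0 HN0].
  set (U := fun n x => (n <= N0)%nat /\ INR n * delta <= x <= INR (S n) * delta).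
  assert (Hb : forall n, dterm s (U n) <= if Nat.leb n N0 then powp delta s else 0).
  { intros n. destruct (Nat.leb_spec n N0).
    - apply dterm_le; try lra. intros x y [_ Hx] [_ Hy]. rewrite S_INR in Hx, Hy. apply Rabs_le. lra.
    - rewrite dterm_empty. lra. intros x [Hx _]. lia. }
  assert (Hp : forall M, fs (fun n => dterm s (U n)) M <= INR (S N0) * powp delta s).
  { intros M. eapply Rle_trans; [apply fs_le; apply Hb|]. rewrite fs_step_const.
    apply Rmult_le_compat_r; [apply powp_nonneg|]. apply le_INR. lia. }
  destruct (nn_series_bounded _ _ (fun n => dterm_nonneg s (U n)) Hp) as [Hex _].
  exists U. split; [|split]; auto.
  - intros n. apply diam_le. intros x y [_ Hx] [_ Hy]. rewrite S_INR in Hx, Hy. apply Rabs_le. lra.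
  - intros x (al & _ & Hc). pose proof (gls_in01 q a al x (Hc 0%nat)) as [X1 X2].
    destruct (exists_least (fun n => x < INR (S n) * delta)) as (n & Hn & Hmin).
    { exists N0. rewrite S_INR. lra. }
    exists n. split; [|split]; auto; try lra.
    + destruct (Nat.le_gt_cases n N0) as [|Hgt]; auto. exfalso. apply (Hmin N0); auto. rewrite S_INR; lra.
    + destruct n as [|k]. simpl; lra. apply Rnot_lt_le. apply Hmin. lia.
Qed.

Lemma ub_null q a (V : nat -> bool) s :
  (forall i, 0 < q i) -> (forall i, q i <= 1) -> 0 < s ->
  ex_series (fun i => if V i then Rpower (q i) s else 0) ->
  Series (fun i => if V i then Rpower (q i) s else 0) < 1 ->
  null s (GLS_set q a (fun i => V i = true)).
Proof.
  intros Hq Hq1 Hs Hex Hlt delta Hd eps He.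
  set (g := fun i => if V i then Rpower (q i) s else 0) in *.
  set (Sg := Series g) in *.
  assert (HSg : 0 <= Sg).
  { apply Series_nonneg; auto. intros i; unfold g; destruct (V i); [left; apply Rpower_pos|lra]. }
  destruct (base_cover q a (fun i => V i = true) s delta Hs Hd) as [U0 HU0].
  set (s0 := Series (fun n => dterm s (U0 n))).
  assert (Hs0 : 0 <= s0) by (apply Series_nonneg; [intros; apply dterm_nonneg|apply HU0]).
  set (e' := eps * (1 - Sg) / 2).
  assert (He' : 0 < e') by (unfold e'; apply Rdiv_lt_0_compat; [apply Rmult_lt_0_compat|]; lra).
  assert (Hit : forall n, exists U, valid_cover s delta (GLS_set q a (fun i => V i = true)) U /\
                 Series (fun m => dterm s (U m)) <= Sg ^ n * s0 + e' / (1 - Sg)).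
  { induction n as [|n [U [HU HUs]]].
    - exists U0. split; auto. rewrite pow_O. fold s0. assert (0 < e' / (1 - Sg)) by (apply Rdiv_lt_0_compat; lra). lra.
    - destruct (ub_step q a V s delta U e' Hq Hq1 Hs Hd He' Hex HU) as (W & HW & HWs).
      exists W. split; auto. fold g Sg in HWs. eapply Rle_trans; [exact HWs|].
      simpl. assert (Sg * Series (fun m => dterm s (U m)) <= Sg * (Sg ^ n * s0 + e' / (1 - Sg))) by
        (apply Rmult_le_compat_l; auto).
      assert (E : Sg * (Sg ^ n * s0 + e' / (1 - Sg)) + e' = Sg * Sg ^ n * s0 + e' / (1 - Sg)) by (field; lra).
      lra. }
  destruct (pow_lt_1_zero Sg ltac:(rewrite Rabs_right; lra) (eps / (2 * (s0 + 1))) ltac:(apply Rdiv_lt_0_compat; lra))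
    as [n Hn].
  specialize (Hn n (le_n n)). rewrite Rabs_right in Hn by (apply Rle_ge, pow_le; auto).
  destruct (Hit n) as (U & HU & HUs). exists U. split; auto.
  assert (Sg ^ n * s0 <= eps / (2 * (s0 + 1)) * s0) by (apply Rmult_le_compat_r; lra).
  assert (eps / (2 * (s0 + 1)) * s0 <= eps / 2).
  { unfold Rdiv. rewrite Rinv_mult. 
    assert (0 < / (s0 + 1)) by (apply Rinv_0_lt_compat; lra).
    assert (/ (s0 + 1) * s0 <= 1).
    { apply Rmult_le_reg_l with (s0 + 1); [lra|]. rewrite <- Rmult_assoc, Rinv_r by lra. lra. }
    nra. }
  assert (E : e' / (1 - Sg) = eps / 2) by (unfold e'; field; lra).
  lra.
Qed.

Lemma GLS_mono q a (W1 W2 : nat -> Prop) x : (forall i, W1 i -> W2 i) -> GLS_set q a W1 x -> GLS_set q a W2 x.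
Proof. intros H (al & H1 & H2). exists al. split; auto. Qed.

Lemma fs_ge_term a M i : (forall n, 0 <= a n) -> (i < M)%nat -> a i <= fs a M.
Proof.
  intros H Hi. apply Rle_trans with (fs a (S i)).
  - simpl. pose proof (fs_nonneg a i H). lra.
  - apply fs_mono; auto.
Qed.

Lemma fs_ge_two a M i j : (forall n, 0 <= a n) -> (i < j)%nat -> (j < M)%nat -> a i + a j <= fs a M.
Proof.
  intros H Hij Hj. apply Rle_trans with (fs a (S j)).
  - simpl. pose proof (fs_ge_term a j i H Hij). lra.
  - apply fs_mono; auto.
Qed.

Lemma lsum_incl (h : nat -> R) (L1 : list nat) : (forall i, 0 <= h i) -> NoDup L1 ->
  forall L2, incl L1 L2 -> lsum h L1 <= lsum h L2.
Proof.
  intros Hh Hnd. induction Hnd as [|x L1 Hx Hnd IH]; intros L2 Hinc.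
  - unfold lsum at 1; simpl. apply lsum_nonneg; auto.
  - destruct (in_split x L2 (Hinc x (or_introl eq_refl))) as (A & B & ->).
    assert (E : lsum h (A ++ x :: B) = h x + lsum h (A ++ B)).
    { rewrite !lsum_app. unfold lsum at 2; simpl. fold (lsum h B). lra. }
    rewrite E. unfold lsum at 1; simpl. fold (lsum h L1).
    assert (lsum h L1 <= lsum h (A ++ B)).
    { apply IH. intros y Hy. assert (Hy2 := Hinc y (or_intror Hy)).
      apply in_app_or in Hy2 as [Hy2|[Hy2|Hy2]]; try (apply in_or_app; auto).
      subst; contradiction. }
    lra.
Qed.

Lemma fs_filter (V : nat -> bool) h M : fs (fun i => if V i then h i else 0) M = lsum h (filter V (seq 0 M)).
Proof.
  induction M as [|M IH]; [unfold lsum; simpl; auto|].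
  rewrite seq_S, filter_app, lsum_app, <- IH. cbn [fs]. simpl.
  destruct (V M); unfold lsum; simpl; lra.
Qed.

Lemma Rpower_exp_mono x s s' : 0 < x <= 1 -> s' <= s -> Rpower x s <= Rpower x s'.
Proof.
  intros Hx Hs. unfold Rpower. apply exp_le_mono.
  assert (ln x <= 0) by (rewrite <- ln_1; apply ln_le_mono; lra). nra.
Qed.

Theorem theorem2
  (q a : nat -> R)
  (hq_pos : forall i, 0 < q i)
  (hq_sum : is_series q 1)
  (ha_sub : forall i, 0 <= a i /\ a i + q i <= 1)
  (ha_disj : forall i j, i <> j -> forall x,
      ~ ((a i < x < a i + q i) /\ (a j < x < a j + q j)))
  (V : nat -> bool) (e : nat -> nat)
  (he_inj : forall m n, e m = e n -> m = n)
  (he_range : forall i, V i = true <-> exists n, e n = i)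
  (h_noroot : ~ exists x, 0 <= x <= 1 /\
      is_series (fun i => if V i then Rpower (q i) x else 0) 1) :
  is_lim_seq
    (fun k => dimH (GLS_set q a (fun i => exists j, (j < k)%nat /\ e j = i)))
    (dimH (GLS_set q a (fun i => V i = true))).
Proof.
  assert (Hq0 : forall n, 0 <= q n) by (intros; left; auto).
  assert (Hqex : ex_series q) by (exists 1; auto).
  assert (HqS : Series q = 1) by (apply is_series_unique; auto).
  assert (Hpair : forall i j, i <> j -> q i + q j <= 1).
  { intros i j Hij. rewrite <- HqS.
    destruct (Nat.lt_total i j) as [H|[H|H]]; [|contradiction|].
    - eapply Rle_trans; [apply (fs_ge_two q (S j) i j)|]; auto. apply nn_series_ge_partial; auto.
    - eapply Rle_trans; [|apply (nn_series_ge_partial q (S i))]; auto.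
      pose proof (fs_ge_two q (S i) j i Hq0 H (le_n _)). lra. }
  set (Rq := Rmax (1 - q 0%nat) (1 - q 1%nat)).
  assert (HRq : forall i, q i <= Rq).
  { intros i. unfold Rq. destruct (Nat.eq_dec i 0) as [->|Hi].
    - pose proof (Hpair 0%nat 1%nat ltac:(lia)). eapply Rle_trans; [|apply Rmax_r]. lra.
    - pose proof (Hpair i 0%nat Hi). eapply Rle_trans; [|apply Rmax_l]. lra. }
  assert (HRq1 : Rq < 1) by (unfold Rq; apply Rmax_lub_lt; pose proof (hq_pos 0%nat); pose proof (hq_pos 1%nat); lra).
  assert (HRq0 : 0 < Rq) by (pose proof (HRq 0%nat); pose proof (hq_pos 0%nat); lra).
  assert (Hq1 : forall i, q i < 1) by (intros i; pose proof (HRq i); lra).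
  set (g := fun s i => if V i then Rpower (q i) s else 0).
  assert (Hg0 : forall s i, 0 <= g s i) by (intros s i; unfold g; destruct (V i); [left; apply Rpower_pos|lra]).
  set (CV := GLS_set q a (fun i => V i = true)).
  set (C := fun k => GLS_set q a (fun i => exists j, (j < k)%nat /\ e j = i)).
  set (F := fun k => map e (seq 0 k)).
  assert (HF : forall k i, In i (F k) <-> exists j, (j < k)%nat /\ e j = i).
  { intros k i. unfold F. rewrite in_map_iff. split.
    - intros (j & <- & Hj). apply in_seq in Hj. exists j; split; auto; lia.
    - intros (j & Hj & <-). exists j. split; auto. apply in_seq; lia. }
  assert (HFnd : forall k, NoDup (F k)).
  { intros k. apply FinFun.Injective_map_NoDup. intros x y; apply he_inj. apply seq_NoDup. }
  assert (HCsub : forall k x, C k x -> CV x).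
  { intros k x. apply GLS_mono. intros i (j & _ & <-). apply he_range. eauto. }
  assert (HCmono : forall k x, C k x -> C (S k) x).
  { intros k x. apply GLS_mono. intros i (j & Hj & <-). exists j; split; auto. }
  assert (Hg1 : ex_series (g 1) /\ Series (g 1) < 1).
  { assert (Hb : forall M, fs (g 1) M <= 1).
    { intros M. apply Rle_trans with (fs q M).
      - apply fs_le. intros i. unfold g. destruct (V i). rewrite Rpower_1; auto; lra. auto.
      - rewrite <- HqS. apply nn_series_ge_partial; auto. }
    destruct (nn_series_bounded (g 1) 1 (Hg0 1) Hb) as [Hex Hle]. split; auto.
    destruct Hle as [|Heq]; auto. exfalso. apply h_noroot. exists 1. split; [lra|].
    assert (Hs := Series_correct _ Hex). rewrite Heq in Hs. exact Hs. }
  assert (HnV : null 1 CV) by exact (ub_null q a V 1 hq_pos (fun i => Rlt_le _ _ (Hq1 i)) Rlt_0_1 (proj1 Hg1) (proj2 Hg1)).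
  assert (HnC : forall k, null 1 (C k)) by (intros k; apply (null_mono 1 (C k) CV); auto; intros x; apply HCsub).
  set (d := fun k => dimH (C k)).
  set (D := dimH CV).
  assert (Hd0 : forall k, 0 <= d k) by (intros k; exact (dimH_ge0 (C k) 1 Rlt_0_1 (HnC k))).
  assert (HdD : forall k, d k <= D) by (intros k; exact (dimH_mono (C k) CV 1 (HCsub k) Rlt_0_1 HnV)).
  assert (Hdm : forall k n, (k <= n)%nat -> d k <= d n).
  { intros k n Hkn. induction Hkn; [lra|]. eapply Rle_trans; [apply IHHkn|].
    exact (dimH_mono _ _ 1 (HCmono m) Rlt_0_1 (HnC (S m))). }
  assert (HD1 : D <= 1) by (exact (dimH_le CV 1 Rlt_0_1 HnV)).
  assert (HLB : forall k s, 0 < s <= 1 -> 1 <= lsum (fun i => Rpower (q i) s) (F k) -> s <= d k).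
  { intros k s Hs Hsum. apply (dimH_ge _ 1); auto; try lra.
    intros s' Hs' Hn'. apply Rnot_lt_le. intros Hlt.
    apply (lb_not_null q a (F k) s' hq_pos Hq1 ha_sub ha_disj (HFnd k) ltac:(lra)).
    - eapply Rle_trans; [exact Hsum|]. apply lsum_le. intros i _. apply Rpower_exp_mono; [split; auto; left; auto|lra].
    - apply (null_mono s' _ (C k)); auto. intros x. apply GLS_mono. intros i Hi. apply HF; auto. }
  assert (HUB : forall s, 0 < s -> ex_series (g s) -> Series (g s) < 1 -> D <= s).
  { intros s Hs Hex Hlt. apply dimH_le; auto. apply ub_null; auto. intros; left; auto. }
  assert (Hreidx : forall s M, exists k, fs (g s) M <= lsum (fun i => Rpower (q i) s) (F k)).
  { intros s M.
    assert (Hk : exists k, forall i, (i < M)%nat -> V i = true -> exists j, (j < k)%nat /\ e j = i).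
    { induction M as [|M [k Hk]].
      - exists 0%nat. intros; lia.
      - destruct (V M) eqn:EV.
        + destruct (proj1 (he_range M) EV) as [j0 Hj0]. exists (Nat.max k (S j0)).
          intros i Hi HVi. destruct (Nat.eq_dec i M) as [->|Hne].
          * exists j0; split; auto; lia.
          * destruct (Hk i ltac:(lia) HVi) as (j & Hj & Ej). exists j; split; auto; lia.
        + exists k. intros i Hi HVi. destruct (Nat.eq_dec i M) as [->|Hne]; [congruence|]. apply Hk; auto; lia. }
    destruct Hk as [k Hk]. exists k. unfold g. rewrite fs_filter.
    apply lsum_incl. intros; left; apply Rpower_pos.
    apply NoDup_filter, seq_NoDup.
    intros i Hi. apply filter_In in Hi as [Hi HVi]. apply in_seq in Hi. apply HF. apply Hk; auto; lia. }
  assert (Hkey : forall L, L < D -> exists k, L < d k).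
  { intros L HL. apply NNPP. intros Hno.
    assert (Hall : forall k, d k <= L) by (intros k; apply Rnot_lt_le; intros Hk; apply Hno; eauto).
    assert (HL0 : 0 <= L) by (pose proof (Hall 0%nat); pose proof (Hd0 0%nat); lra).
    set (s1 := L + (D - L) / 3). set (s2 := L + 2 * (D - L) / 3).
    assert (Hs1 : forall k, lsum (fun i => Rpower (q i) s1) (F k) < 1).
    { intros k. apply Rnot_le_lt. intros Hle.
      pose proof (HLB k s1 ltac:(unfold s1; split; lra) Hle). pose proof (Hall k). unfold s1 in *. lra. }
    assert (Hb1 : forall M, fs (g s1) M <= 1).
    { intros M. destruct (Hreidx s1 M) as [k Hk]. pose proof (Hs1 k). lra. }
    destruct (nn_series_bounded (g s1) 1 (Hg0 s1) Hb1) as [Hex1 Hle1].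
    set (c := Rpower Rq (s2 - s1)).
    assert (Hc1 : c < 1).
    { unfold c, Rpower. apply Rlt_le_trans with (exp 0); [apply exp_increasing|rewrite exp_0; lra].
      assert (ln Rq < 0) by (rewrite <- ln_1; apply ln_increasing; lra).
      assert (0 < s2 - s1) by (unfold s1, s2; lra).
      pose proof (Rmult_lt_compat_l (s2 - s1) _ _ H0 H) as X. rewrite Rmult_0_r in X. exact X. }
    assert (Hcmp : forall i, g s2 i <= c * g s1 i).
    { intros i. unfold g. destruct (V i); [|lra].
      replace s2 with (s1 + (s2 - s1)) at 1 by ring. rewrite Rpower_plus.
      rewrite Rmult_comm. apply Rmult_le_compat_r. left; apply Rpower_pos.
      apply Rpower_le_pos; auto. unfold s1, s2; lra. }
    assert (Hb2 : forall M, fs (g s2) M <= c).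
    { intros M. apply Rle_trans with (fs (fun i => c * g s1 i) M). apply fs_le; auto.
      rewrite fs_scal. pose proof (Hb1 M). pose proof (Rpower_pos Rq (s2 - s1)). fold c in H0.
      assert (c * fs (g s1) M <= c * 1) by (apply Rmult_le_compat_l; lra). lra. }
    destruct (nn_series_bounded (g s2) c (Hg0 s2) Hb2) as [Hex2 Hle2].
    pose proof (HUB s2 ltac:(unfold s2; lra) Hex2 ltac:(lra)). unfold s2 in *. lra. }
  apply is_lim_seq_spec. intros eps.
  destruct (Hkey (D - eps) ltac:(destruct eps; simpl; lra)) as [k0 Hk0].
  exists k0. intros n Hn. fold (d n). fold D.
  pose proof (Hdm k0 n Hn). pose proof (HdD n).
  pose proof (cond_pos eps). change (Rabs (d n - D) < eps). apply Rabs_def1; lra.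
Qed.
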